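(* Let $q=4$. The groups $G_4$ and $G_4^*$ have the same orbits on planes and the same orbits on points. Consequently the $G_4$-orbits of planes are the sets of $\Gamma$-planes ($5$), $2_{\mathscr C}$-planes ($20$), $3_{\mathscr C}$-planes ($10$), $\overline{1_{\mathscr C}}$-planes ($30$), $0_{\mathscr C}$-planes ($20$), and the $G_4$-orbits of points are the sets of $\mathscr C$-points ($5$), T-points ($20$), $3_\Gamma$-points ($10$), $1_\Gamma$-points ($30$), $0_\Gamma$-points ($20$).
   Context: Notation. $\mathbb F_q$ is the field with $q$ elements, $\mathbb F_q^+=\mathbb F_q\cup\{\infty\}$. Points of $\mathrm{PG}(3,q)$ are written $\mathbf P(x_0,x_1,x_2,x_3)$ with $x$ a nonzero row vector up to scalars; $\boldsymbol\pi(c_0,c_1,c_2,c_3)$ is the plane $c_0x_0+c_1x_1+c_2x_2+c_3x_3=0$. Put $P(t)=\mathbf P(t^3,t^2,t,1)$ for $t\in\mathbb F_q$, $P(\infty)=\mathbf P(1,0,0,0)$, and $\mathscr C=\{P(t):t\in\mathbb F_q^+\}$ (the twisted cubic). The osculating planes are $\pi_{\rm osc}(t)=\boldsymbol\pi(1,-3t,3t^2,-t^3)$ ($t\in\mathbb F_q$) and $\pi_{\rm osc}(\infty)=\boldsymbol\pi(0,0,0,1)$; these $q+1$ planes are called $\Gamma$-planes. The tangent at $P(t)$, $t\in\mathbb F_q$, is the line through $P(t)$ and $\mathbf P(3t^2,2t,1,0)$; the tangent at $P(\infty)$ is the line through $\mathbf P(1,0,0,0)$ and $\mathbf P(0,1,0,0)$.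 $G_q$ is the group of all projectivities of $\mathrm{PG}(3,q)$ mapping $\mathscr C$ onto itself. For $a,b,c,d\in\mathbb F_q$, $ad-bc\ne0$, let $$M(a,b,c,d)=\begin{pmatrix} a^3&a^2c&ac^2&c^3\\ 3a^2b&a^2d+2abc&bc^2+2acd&3c^2d\\ 3ab^2&b^2c+2abd&ad^2+2bcd&3cd^2\\ b^3&b^2d&bd^2&d^3\end{pmatrix};$$ the projectivities $\mathbf P(x)\mapsto\mathbf P(xM(a,b,c,d))$ form the subgroup $G_q^*\cong PGL(2,q)$ of $G_q$ (critical subgroup). Plane types: $\Gamma$-plane = osculating plane; $\overline{1_{\mathscr C}}$-plane = non-osculating plane meeting $\mathscr C$ in exactly one point; $d_{\mathscr C}$-plane ($d\in\{0,2,3\}$) = plane meeting $\mathscr C$ in exactly $d$ points. Point types (for $q\not\equiv0\pmod 3$): $\mathscr C$-point = point of $\mathscr C$; T-point = point off $\mathscr C$ on some tangent; for $\mu\in\{0,1,3\}$, $\mu_\Gamma$-point = point off $\mathscr C$, on no tangent, lying on exactly $\mu$ $\Gamma$-planes. *)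

(* Defs.v *)
(* Twisted cubic in PG(3,q), q = #|F|. *)
From HB Require Import structures.
From mathcomp Require Import all_boot all_order all_algebra.
Set Implicit Arguments. Unset Strict Implicit. Unset Printing Implicit Defensive.
Import GRing.Theory.
Local Open Scope ring_scope.

Inductive plane_kind := GammaPl | TwoC | ThreeC | OneBarC | ZeroC.
Inductive point_kind := CPt | TPt | ThreeG | OneG | ZeroG.

Section TwistedCubic.
Variable F : finFieldType.

(* vectors of F^4 (row vectors); points and planes are nonzero vectors up to scalars *)
Definition vec4 (a b c d : F) : 'rV[F]_4 := \row_(i < 4) nth 0 [:: a; b; c; d] i.

Definition proj_eq (x y : 'rV[F]_4) : bool := [exists k : F, (k != 0) && (y == k *: x)].

Definition dot (x c : 'rV[F]_4) : F := \sum_(i < 4) x 0 i * c 0 i.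
Definition incid (x c : 'rV[F]_4) : bool := dot x c == 0.

(* F_q^+ = option F, with None = infinity *)
Definition Pt (t : option F) : 'rV[F]_4 :=
  match t with Some t => vec4 (t ^+ 3) (t ^+ 2) t 1 | None => vec4 1 0 0 0 end.

(* second point spanning the tangent at P(t) *)
Definition Tdir (t : option F) : 'rV[F]_4 :=
  match t with Some t => vec4 (3%:R * t ^+ 2) (2%:R * t) 1 0 | None => vec4 0 1 0 0 end.

(* osculating plane pi_osc(t) *)
Definition Osc (t : option F) : 'rV[F]_4 :=
  match t with
  | Some t => vec4 1 (- (3%:R * t)) (3%:R * t ^+ 2) (- t ^+ 3)
  | None => vec4 0 0 0 1 end.

Definition on_C (x : 'rV[F]_4) : bool := [exists t, proj_eq (Pt t) x].

Definition on_tangent (x : 'rV[F]_4) : bool :=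
  [exists t, [exists a : F, [exists b : F, x == a *: Pt t + b *: Tdir t]]].

Definition in_Gq (A : 'M[F]_4) : Prop :=
  A \in unitmx /\
  (forall t, exists s, proj_eq (Pt s) (Pt t *m A)) /\
  (forall s, exists t, proj_eq (Pt s) (Pt t *m A)).

Definition Mabcd (a b c d : F) : 'M[F]_4 :=
  \matrix_(i < 4, j < 4) nth 0 (nth [::] [::
    [:: a ^+ 3; a ^+ 2 * c; a * c ^+ 2; c ^+ 3];
    [:: 3%:R * a ^+ 2 * b; a ^+ 2 * d + 2%:R * a * b * c;
        b * c ^+ 2 + 2%:R * a * c * d; 3%:R * c ^+ 2 * d];
    [:: 3%:R * a * b ^+ 2; b ^+ 2 * c + 2%:R * a * b * d;
        a * d ^+ 2 + 2%:R * b * c * d; 3%:R * c * d ^+ 2];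
    [:: b ^+ 3; b ^+ 2 * d; b * d ^+ 2; d ^+ 3]] i) j.

Definition in_Gstar (A : 'M[F]_4) : Prop :=
  exists a b c d : F, a * d - b * c != 0 /\ A = Mabcd a b c d.

Definition pt_orbit (S : 'M[F]_4 -> Prop) (x y : 'rV[F]_4) : Prop :=
  exists A, S A /\ proj_eq (x *m A) y.

Definition pl_orbit (S : 'M[F]_4 -> Prop) (c c' : 'rV[F]_4) : Prop :=
  exists A, S A /\ forall x : 'rV[F]_4, x != 0 -> (incid x c = incid (x *m A) c').


Definition nC (c : 'rV[F]_4) : nat := #|[set t : option F | incid (Pt t) c]|.
Definition is_Gamma (c : 'rV[F]_4) : bool := [exists t, proj_eq (Osc t) c].

Definition plane_of_kind (k : plane_kind) (c : 'rV[F]_4) : bool :=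
  (c != 0) &&
  match k with
  | GammaPl => is_Gamma c
  | TwoC => nC c == 2%N
  | ThreeC => nC c == 3%N
  | OneBarC => ~~ is_Gamma c && (nC c == 1%N)
  | ZeroC => nC c == 0%N
  end.

Definition nG (x : 'rV[F]_4) : nat := #|[set t : option F | incid x (Osc t)]|.

Definition point_of_kind (k : point_kind) (x : 'rV[F]_4) : bool :=
  (x != 0) &&
  match k with
  | CPt => on_C x
  | TPt => ~~ on_C x && on_tangent x
  | ThreeG => [&& ~~ on_C x, ~~ on_tangent x & nG x == 3%N]
  | OneG => [&& ~~ on_C x, ~~ on_tangent x & nG x == 1%N]
  | ZeroG => [&& ~~ on_C x, ~~ on_tangent x & nG x == 0%N]
  end.

(* number of nonzero vectors of a kind; number of projective objects = this / (q-1) *)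
Definition card_plane_kind (k : plane_kind) : nat :=
  #|[set c : 'rV[F]_4 | plane_of_kind k c]|.
Definition card_point_kind (k : point_kind) : nat :=
  #|[set x : 'rV[F]_4 | point_of_kind k x]|.
End TwistedCubic.

(* Main.v *)
From HB Require Import structures.
Require Import Defs.
From mathcomp Require Import all_boot all_order all_algebra finfield.
From mathcomp Require Import ring zify.
Set Implicit Arguments. Unset Strict Implicit. Unset Printing Implicit Defensive.

(* Strategy: F (with #|F| = 4) is isomorphic to a concrete model K
   of GF(4) (char 2, w^2 = w + 1); all finite statements are transported to K and
   checked by computation.  Elements of G_4 are reduced, modulo G_4^* (whose
   matrices M(a,b,c,d) form a group by the identity M(G)M(G') = M(GG')), to
   matrices fixing P(oo), P(0), P(1), which are enumerated. *)

Inductive K := K0 | K1 | KW | KW2.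
Definition keqb (a b : K) : bool :=
  match a, b with K0,K0 | K1,K1 | KW,KW | KW2,KW2 => true | _,_ => false end.
Lemma keqP : Equality.axiom keqb.
Proof. by case; case; constructor. Qed.
HB.instance Definition _ := hasDecEq.Build K keqP.

Definition kadd (a b : K) : K :=
  match a, b with
  | K0, x => x | x, K0 => x
  | K1, K1 => K0 | K1, KW => KW2 | K1, KW2 => KW
  | KW, K1 => KW2 | KW, KW => K0 | KW, KW2 => K1
  | KW2, K1 => KW | KW2, KW => K1 | KW2, KW2 => K0 end.
Definition kmul (a b : K) : K :=
  match a, b with
  | K0, _ => K0 | K1, x => x | _, K0 => K0
  | KW, K1 => KW | KW, KW => KW2 | KW, KW2 => K1
  | KW2, K1 => KW2 | KW2, KW => K1 | KW2, KW2 => KW end.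
Definition knz (a : K) : bool := if a is K0 then false else true.

Definition allK := [:: K0; K1; KW; KW2].
Definition nzK := [:: K1; KW; KW2].
Definition allTK : seq (option K) := None :: map Some allK.

Inductive V4 := mkV of K & K & K & K.
Definition veqb (u v : V4) : bool :=
  let: mkV a b c d := u in let: mkV a' b' c' d' := v in
  keqb a a' && keqb b b' && keqb c c' && keqb d d'.
Lemma veqP : Equality.axiom veqb.
Proof.
case=> a b c d [] a' b' c' d' /=.
by apply: (iffP idP) => [/andP[/andP[/andP[/keqP-> /keqP->] /keqP->] /keqP->]|[-> -> -> ->]] //;
  rewrite /keqb; case: a'; case: b'; case: c'; case: d'.
Qed.
HB.instance Definition _ := hasDecEq.Build V4 veqP.

Inductive M4 := mkM of V4 & V4 & V4 & V4.
Definition meqb (A B : M4) : bool :=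
  let: mkM a b c d := A in let: mkM a' b' c' d' := B in
  (a == a') && (b == b') && (c == c') && (d == d').
Lemma meqP : Equality.axiom meqb.
Proof.
case=> a b c d [] a' b' c' d' /=.
by apply: (iffP idP) => [/andP[/andP[/andP[/eqP-> /eqP->] /eqP->] /eqP->]|[-> -> -> ->]] //;
  rewrite !eqxx.
Qed.
HB.instance Definition _ := hasDecEq.Build M4 meqP.

Definition entV (v : V4) (j : nat) : K :=
  let: mkV a b c d := v in
  match j with 0 => a | 1 => b | 2 => c | _ => d end.
Definition rowK (A : M4) (i : nat) : V4 :=
  let: mkM r0 r1 r2 r3 := A in
  match i with 0 => r0 | 1 => r1 | 2 => r2 | _ => r3 end.
Definition entM (A : M4) (i j : nat) : K := entV (rowK A i) j.

Definition vnz (v : V4) : bool :=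
  let: mkV a b c d := v in knz a || knz b || knz c || knz d.
Definition scK (k : K) (v : V4) : V4 :=
  let: mkV a b c d := v in mkV (kmul k a) (kmul k b) (kmul k c) (kmul k d).
Definition vaddK (u v : V4) : V4 :=
  let: mkV a b c d := u in let: mkV a' b' c' d' := v in
  mkV (kadd a a') (kadd b b') (kadd c c') (kadd d d').
Definition dotK (u v : V4) : K :=
  let: mkV a b c d := u in let: mkV a' b' c' d' := v in
  kadd (kmul a a') (kadd (kmul b b') (kadd (kmul c c') (kmul d d'))).
Definition incidK (x c : V4) : bool := ~~ knz (dotK x c).
Definition mulvmK (x : V4) (A : M4) : V4 :=
  let: mkV x0 x1 x2 x3 := x in let: mkM r0 r1 r2 r3 := A in
  vaddK (scK x0 r0) (vaddK (scK x1 r1) (vaddK (scK x2 r2) (scK x3 r3))).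
Definition mulmmK (A B : M4) : M4 :=
  let: mkM r0 r1 r2 r3 := A in mkM (mulvmK r0 B) (mulvmK r1 B) (mulvmK r2 B) (mulvmK r3 B).
Definition trK (A : M4) : M4 :=
  mkM (mkV (entM A 0 0) (entM A 1 0) (entM A 2 0) (entM A 3 0))
      (mkV (entM A 0 1) (entM A 1 1) (entM A 2 1) (entM A 3 1))
      (mkV (entM A 0 2) (entM A 1 2) (entM A 2 2) (entM A 3 2))
      (mkV (entM A 0 3) (entM A 1 3) (entM A 2 3) (entM A 3 3)).
Definition scalM (d : K) : M4 :=
  mkM (mkV d K0 K0 K0) (mkV K0 d K0 K0) (mkV K0 K0 d K0) (mkV K0 K0 K0 d).

Definition skip (i k : nat) : nat := if k < i then k else k.+1.
Definition cof (A : M4) (i j : nat) : K :=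
  let f r c := entM A (skip i r) (skip j c) in
  kadd (kmul (f 0 0) (kadd (kmul (f 1 1) (f 2 2)) (kmul (f 1 2) (f 2 1))))
  (kadd (kmul (f 0 1) (kadd (kmul (f 1 0) (f 2 2)) (kmul (f 1 2) (f 2 0))))
        (kmul (f 0 2) (kadd (kmul (f 1 0) (f 2 1)) (kmul (f 1 1) (f 2 0))))).
Definition adjK (A : M4) : M4 :=
  mkM (mkV (cof A 0 0) (cof A 1 0) (cof A 2 0) (cof A 3 0))
      (mkV (cof A 0 1) (cof A 1 1) (cof A 2 1) (cof A 3 1))
      (mkV (cof A 0 2) (cof A 1 2) (cof A 2 2) (cof A 3 2))
      (mkV (cof A 0 3) (cof A 1 3) (cof A 2 3) (cof A 3 3)).

Definition PtK (t : option K) : V4 :=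
  if t is Some t then mkV (kmul t (kmul t t)) (kmul t t) t K1 else mkV K1 K0 K0 K0.
Definition TdirK (t : option K) : V4 :=
  if t is Some t then mkV (kmul t t) K0 K1 K0 else mkV K0 K1 K0 K0.
Definition OscK (t : option K) : V4 :=
  if t is Some t then mkV K1 t (kmul t t) (kmul t (kmul t t)) else mkV K0 K0 K0 K1.

Definition proj_eqK (x y : V4) : bool := has (fun k => knz k && veqb y (scK k x)) allK.
Definition on_CK (x : V4) : bool := has (fun t => proj_eqK (PtK t) x) allTK.
Definition on_tangentK (x : V4) : bool :=
  has (fun t => has (fun a => has (fun b =>
    veqb x (vaddK (scK a (PtK t)) (scK b (TdirK t)))) allK) allK) allTK.
Definition nCK (c : V4) : nat := count (fun t => incidK (PtK t) c) allTK.
Definition is_GammaK (c : V4) : bool := has (fun t => proj_eqK (OscK t) c) allTK.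
Definition nGK (x : V4) : nat := count (fun t => incidK x (OscK t)) allTK.

Definition plane_of_kindK (k : plane_kind) (c : V4) : bool :=
  vnz c &&
  match k with
  | GammaPl => is_GammaK c
  | TwoC => nCK c == 2%N
  | ThreeC => nCK c == 3%N
  | OneBarC => ~~ is_GammaK c && (nCK c == 1%N)
  | ZeroC => nCK c == 0%N
  end.
Definition point_of_kindK (k : point_kind) (x : V4) : bool :=
  vnz x &&
  match k with
  | CPt => on_CK x
  | TPt => ~~ on_CK x && on_tangentK x
  | ThreeG => [&& ~~ on_CK x, ~~ on_tangentK x & nGK x == 3%N]
  | OneG => [&& ~~ on_CK x, ~~ on_tangentK x & nGK x == 1%N]
  | ZeroG => [&& ~~ on_CK x, ~~ on_tangentK x & nGK x == 0%N]
  end.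


Definition pk_eqb (a b : point_kind) :=
  match a, b with CPt,CPt|TPt,TPt|ThreeG,ThreeG|OneG,OneG|ZeroG,ZeroG => true | _,_ => false end.
Lemma pk_eqP : Equality.axiom pk_eqb. Proof. by case; case; constructor. Qed.
HB.instance Definition _ := hasDecEq.Build point_kind pk_eqP.
Definition lk_eqb (a b : plane_kind) :=
  match a, b with GammaPl,GammaPl|TwoC,TwoC|ThreeC,ThreeC|OneBarC,OneBarC|ZeroC,ZeroC => true | _,_ => false end.
Lemma lk_eqP : Equality.axiom lk_eqb. Proof. by case; case; constructor. Qed.
HB.instance Definition _ := hasDecEq.Build plane_kind lk_eqP.

Definition allPK := [:: CPt; TPt; ThreeG; OneG; ZeroG].
Definition allLK := [:: GammaPl; TwoC; ThreeC; OneBarC; ZeroC].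

Definition kPt (v : V4) : point_kind :=
  let: mkV a b c d := v in
  match a with
  | K0 => match b with
    | K0 => match c with
      | K0 => match d with K0 => ZeroG | K1 => CPt | KW => CPt | KW2 => CPt end
      | K1 => match d with K0 => TPt | K1 => TPt | KW => TPt | KW2 => TPt end
      | KW => match d with K0 => TPt | K1 => TPt | KW => TPt | KW2 => TPt end
      | KW2 => match d with K0 => TPt | K1 => TPt | KW => TPt | KW2 => TPt end
      end
    | K1 => match c with
      | K0 => match d with K0 => TPt | K1 => TPt | KW => TPt | KW2 => TPt end
      | K1 => match d with K0 => ThreeG | K1 => ThreeG | KW => OneG | KW2 => OneG end
      | KW => match d with K0 => ThreeG | K1 => OneG | KW => OneG | KW2 => ThreeG end
      | KW2 => match d with K0 => ThreeG | K1 => OneG | KW => ThreeG | KW2 => OneG end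
      end
    | KW => match c with
      | K0 => match d with K0 => TPt | K1 => TPt | KW => TPt | KW2 => TPt end
      | K1 => match d with K0 => ThreeG | K1 => OneG | KW => OneG | KW2 => ThreeG end
      | KW => match d with K0 => ThreeG | K1 => OneG | KW => ThreeG | KW2 => OneG end
      | KW2 => match d with K0 => ThreeG | K1 => ThreeG | KW => OneG | KW2 => OneG end
      end
    | KW2 => match c with
      | K0 => match d with K0 => TPt | K1 => TPt | KW => TPt | KW2 => TPt end
      | K1 => match d with K0 => ThreeG | K1 => OneG | KW => ThreeG | KW2 => OneG end
      | KW => match d with K0 => ThreeG | K1 => ThreeG | KW => OneG | KW2 => OneG end
      | KW2 => match d with K0 => ThreeG | K1 => OneG | KW => OneG | KW2 => ThreeG end
      end
    end
  | K1 => match b with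
    | K0 => match c with
      | K0 => match d with K0 => CPt | K1 => ThreeG | KW => ZeroG | KW2 => ZeroG end
      | K1 => match d with K0 => TPt | K1 => ZeroG | KW => OneG | KW2 => OneG end
      | KW => match d with K0 => TPt | K1 => ZeroG | KW => OneG | KW2 => OneG end
      | KW2 => match d with K0 => TPt | K1 => ZeroG | KW => OneG | KW2 => OneG end
      end
    | K1 => match c with
      | K0 => match d with K0 => TPt | K1 => ZeroG | KW => OneG | KW2 => OneG end
      | K1 => match d with K0 => ThreeG | K1 => CPt | KW => ZeroG | KW2 => ZeroG end
      | KW => match d with K0 => OneG | K1 => OneG | KW => TPt | KW2 => ZeroG end
      | KW2 => match d with K0 => OneG | K1 => OneG | KW => ZeroG | KW2 => TPt end
      end
    | KW => match c with
      | K0 => match d with K0 => TPt | K1 => ZeroG | KW => OneG | KW2 => OneG end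
      | K1 => match d with K0 => OneG | K1 => OneG | KW => TPt | KW2 => ZeroG end
      | KW => match d with K0 => OneG | K1 => OneG | KW => ZeroG | KW2 => TPt end
      | KW2 => match d with K0 => ThreeG | K1 => CPt | KW => ZeroG | KW2 => ZeroG end
      end
    | KW2 => match c with
      | K0 => match d with K0 => TPt | K1 => ZeroG | KW => OneG | KW2 => OneG end
      | K1 => match d with K0 => OneG | K1 => OneG | KW => ZeroG | KW2 => TPt end
      | KW => match d with K0 => ThreeG | K1 => CPt | KW => ZeroG | KW2 => ZeroG end
      | KW2 => match d with K0 => OneG | K1 => OneG | KW => TPt | KW2 => ZeroG end
      end
    end
  | KW => match b with
    | K0 => match c with
      | K0 => match d with K0 => CPt | K1 => ZeroG | KW => ThreeG | KW2 => ZeroG end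
      | K1 => match d with K0 => TPt | K1 => OneG | KW => ZeroG | KW2 => OneG end
      | KW => match d with K0 => TPt | K1 => OneG | KW => ZeroG | KW2 => OneG end
      | KW2 => match d with K0 => TPt | K1 => OneG | KW => ZeroG | KW2 => OneG end
      end
    | K1 => match c with
      | K0 => match d with K0 => TPt | K1 => OneG | KW => ZeroG | KW2 => OneG end
      | K1 => match d with K0 => OneG | K1 => ZeroG | KW => OneG | KW2 => TPt end
      | KW => match d with K0 => OneG | K1 => TPt | KW => OneG | KW2 => ZeroG end
      | KW2 => match d with K0 => ThreeG | K1 => ZeroG | KW => CPt | KW2 => ZeroG end
      end
    | KW => match c with
      | K0 => match d with K0 => TPt | K1 => OneG | KW => ZeroG | KW2 => OneG end
      | K1 => match d with K0 => OneG | K1 => TPt | KW => OneG | KW2 => ZeroG end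
      | KW => match d with K0 => ThreeG | K1 => ZeroG | KW => CPt | KW2 => ZeroG end
      | KW2 => match d with K0 => OneG | K1 => ZeroG | KW => OneG | KW2 => TPt end
      end
    | KW2 => match c with
      | K0 => match d with K0 => TPt | K1 => OneG | KW => ZeroG | KW2 => OneG end
      | K1 => match d with K0 => ThreeG | K1 => ZeroG | KW => CPt | KW2 => ZeroG end
      | KW => match d with K0 => OneG | K1 => ZeroG | KW => OneG | KW2 => TPt end
      | KW2 => match d with K0 => OneG | K1 => TPt | KW => OneG | KW2 => ZeroG end
      end
    end
  | KW2 => match b with
    | K0 => match c with
      | K0 => match d with K0 => CPt | K1 => ZeroG | KW => ZeroG | KW2 => ThreeG end
      | K1 => match d with K0 => TPt | K1 => OneG | KW => OneG | KW2 => ZeroG end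
      | KW => match d with K0 => TPt | K1 => OneG | KW => OneG | KW2 => ZeroG end
      | KW2 => match d with K0 => TPt | K1 => OneG | KW => OneG | KW2 => ZeroG end
      end
    | K1 => match c with
      | K0 => match d with K0 => TPt | K1 => OneG | KW => OneG | KW2 => ZeroG end
      | K1 => match d with K0 => OneG | K1 => ZeroG | KW => TPt | KW2 => OneG end
      | KW => match d with K0 => ThreeG | K1 => ZeroG | KW => ZeroG | KW2 => CPt end
      | KW2 => match d with K0 => OneG | K1 => TPt | KW => ZeroG | KW2 => OneG end
      end
    | KW => match c with
      | K0 => match d with K0 => TPt | K1 => OneG | KW => OneG | KW2 => ZeroG end
      | K1 => match d with K0 => ThreeG | K1 => ZeroG | KW => ZeroG | KW2 => CPt end
      | KW => match d with K0 => OneG | K1 => TPt | KW => ZeroG | KW2 => OneG end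
      | KW2 => match d with K0 => OneG | K1 => ZeroG | KW => TPt | KW2 => OneG end
      end
    | KW2 => match c with
      | K0 => match d with K0 => TPt | K1 => OneG | KW => OneG | KW2 => ZeroG end
      | K1 => match d with K0 => OneG | K1 => TPt | KW => ZeroG | KW2 => OneG end
      | KW => match d with K0 => OneG | K1 => ZeroG | KW => TPt | KW2 => OneG end
      | KW2 => match d with K0 => ThreeG | K1 => ZeroG | KW => ZeroG | KW2 => CPt end
      end
    end
  end.

Definition kPl (v : V4) : plane_kind :=
  let: mkV a b c d := v in
  match a with
  | K0 => match b with
    | K0 => match c with
      | K0 => match d with K0 => ZeroC | K1 => GammaPl | KW => GammaPl | KW2 => GammaPl end
      | K1 => match d with K0 => TwoC | K1 => TwoC | KW => TwoC | KW2 => TwoC end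
      | KW => match d with K0 => TwoC | K1 => TwoC | KW => TwoC | KW2 => TwoC end
      | KW2 => match d with K0 => TwoC | K1 => TwoC | KW => TwoC | KW2 => TwoC end
      end
    | K1 => match c with
      | K0 => match d with K0 => TwoC | K1 => TwoC | KW => TwoC | KW2 => TwoC end
      | K1 => match d with K0 => ThreeC | K1 => ThreeC | KW => OneBarC | KW2 => OneBarC end
      | KW => match d with K0 => ThreeC | K1 => OneBarC | KW => OneBarC | KW2 => ThreeC end
      | KW2 => match d with K0 => ThreeC | K1 => OneBarC | KW => ThreeC | KW2 => OneBarC end
      end
    | KW => match c with
      | K0 => match d with K0 => TwoC | K1 => TwoC | KW => TwoC | KW2 => TwoC end
      | K1 => match d with K0 => ThreeC | K1 => OneBarC | KW => OneBarC | KW2 => ThreeC end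
      | KW => match d with K0 => ThreeC | K1 => OneBarC | KW => ThreeC | KW2 => OneBarC end
      | KW2 => match d with K0 => ThreeC | K1 => ThreeC | KW => OneBarC | KW2 => OneBarC end
      end
    | KW2 => match c with
      | K0 => match d with K0 => TwoC | K1 => TwoC | KW => TwoC | KW2 => TwoC end
      | K1 => match d with K0 => ThreeC | K1 => OneBarC | KW => ThreeC | KW2 => OneBarC end
      | KW => match d with K0 => ThreeC | K1 => ThreeC | KW => OneBarC | KW2 => OneBarC end
      | KW2 => match d with K0 => ThreeC | K1 => OneBarC | KW => OneBarC | KW2 => ThreeC end
      end
    end
  | K1 => match b with
    | K0 => match c with
      | K0 => match d with K0 => GammaPl | K1 => ThreeC | KW => ZeroC | KW2 => ZeroC end
      | K1 => match d with K0 => TwoC | K1 => ZeroC | KW => OneBarC | KW2 => OneBarC end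
      | KW => match d with K0 => TwoC | K1 => ZeroC | KW => OneBarC | KW2 => OneBarC end
      | KW2 => match d with K0 => TwoC | K1 => ZeroC | KW => OneBarC | KW2 => OneBarC end
      end
    | K1 => match c with
      | K0 => match d with K0 => TwoC | K1 => ZeroC | KW => OneBarC | KW2 => OneBarC end
      | K1 => match d with K0 => ThreeC | K1 => GammaPl | KW => ZeroC | KW2 => ZeroC end
      | KW => match d with K0 => OneBarC | K1 => OneBarC | KW => TwoC | KW2 => ZeroC end
      | KW2 => match d with K0 => OneBarC | K1 => OneBarC | KW => ZeroC | KW2 => TwoC end
      end
    | KW => match c with
      | K0 => match d with K0 => TwoC | K1 => ZeroC | KW => OneBarC | KW2 => OneBarC end
      | K1 => match d with K0 => OneBarC | K1 => OneBarC | KW => TwoC | KW2 => ZeroC end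
      | KW => match d with K0 => OneBarC | K1 => OneBarC | KW => ZeroC | KW2 => TwoC end
      | KW2 => match d with K0 => ThreeC | K1 => GammaPl | KW => ZeroC | KW2 => ZeroC end
      end
    | KW2 => match c with
      | K0 => match d with K0 => TwoC | K1 => ZeroC | KW => OneBarC | KW2 => OneBarC end
      | K1 => match d with K0 => OneBarC | K1 => OneBarC | KW => ZeroC | KW2 => TwoC end
      | KW => match d with K0 => ThreeC | K1 => GammaPl | KW => ZeroC | KW2 => ZeroC end
      | KW2 => match d with K0 => OneBarC | K1 => OneBarC | KW => TwoC | KW2 => ZeroC end
      end
    end
  | KW => match b with
    | K0 => match c with
      | K0 => match d with K0 => GammaPl | K1 => ZeroC | KW => ThreeC | KW2 => ZeroC end
      | K1 => match d with K0 => TwoC | K1 => OneBarC | KW => ZeroC | KW2 => OneBarC end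
      | KW => match d with K0 => TwoC | K1 => OneBarC | KW => ZeroC | KW2 => OneBarC end
      | KW2 => match d with K0 => TwoC | K1 => OneBarC | KW => ZeroC | KW2 => OneBarC end
      end
    | K1 => match c with
      | K0 => match d with K0 => TwoC | K1 => OneBarC | KW => ZeroC | KW2 => OneBarC end
      | K1 => match d with K0 => OneBarC | K1 => ZeroC | KW => OneBarC | KW2 => TwoC end
      | KW => match d with K0 => OneBarC | K1 => TwoC | KW => OneBarC | KW2 => ZeroC end
      | KW2 => match d with K0 => ThreeC | K1 => ZeroC | KW => GammaPl | KW2 => ZeroC end
      end
    | KW => match c with
      | K0 => match d with K0 => TwoC | K1 => OneBarC | KW => ZeroC | KW2 => OneBarC end
      | K1 => match d with K0 => OneBarC | K1 => TwoC | KW => OneBarC | KW2 => ZeroC end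
      | KW => match d with K0 => ThreeC | K1 => ZeroC | KW => GammaPl | KW2 => ZeroC end
      | KW2 => match d with K0 => OneBarC | K1 => ZeroC | KW => OneBarC | KW2 => TwoC end
      end
    | KW2 => match c with
      | K0 => match d with K0 => TwoC | K1 => OneBarC | KW => ZeroC | KW2 => OneBarC end
      | K1 => match d with K0 => ThreeC | K1 => ZeroC | KW => GammaPl | KW2 => ZeroC end
      | KW => match d with K0 => OneBarC | K1 => ZeroC | KW => OneBarC | KW2 => TwoC end
      | KW2 => match d with K0 => OneBarC | K1 => TwoC | KW => OneBarC | KW2 => ZeroC end
      end
    end
  | KW2 => match b with
    | K0 => match c with
      | K0 => match d with K0 => GammaPl | K1 => ZeroC | KW => ZeroC | KW2 => ThreeC end
      | K1 => match d with K0 => TwoC | K1 => OneBarC | KW => OneBarC | KW2 => ZeroC end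
      | KW => match d with K0 => TwoC | K1 => OneBarC | KW => OneBarC | KW2 => ZeroC end
      | KW2 => match d with K0 => TwoC | K1 => OneBarC | KW => OneBarC | KW2 => ZeroC end
      end
    | K1 => match c with
      | K0 => match d with K0 => TwoC | K1 => OneBarC | KW => OneBarC | KW2 => ZeroC end
      | K1 => match d with K0 => OneBarC | K1 => ZeroC | KW => TwoC | KW2 => OneBarC end
      | KW => match d with K0 => ThreeC | K1 => ZeroC | KW => ZeroC | KW2 => GammaPl end
      | KW2 => match d with K0 => OneBarC | K1 => TwoC | KW => ZeroC | KW2 => OneBarC end
      end
    | KW => match c with
      | K0 => match d with K0 => TwoC | K1 => OneBarC | KW => OneBarC | KW2 => ZeroC end
      | K1 => match d with K0 => ThreeC | K1 => ZeroC | KW => ZeroC | KW2 => GammaPl end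
      | KW => match d with K0 => OneBarC | K1 => TwoC | KW => ZeroC | KW2 => OneBarC end
      | KW2 => match d with K0 => OneBarC | K1 => ZeroC | KW => TwoC | KW2 => OneBarC end
      end
    | KW2 => match c with
      | K0 => match d with K0 => TwoC | K1 => OneBarC | KW => OneBarC | KW2 => ZeroC end
      | K1 => match d with K0 => OneBarC | K1 => TwoC | KW => ZeroC | KW2 => OneBarC end
      | KW => match d with K0 => OneBarC | K1 => ZeroC | KW => TwoC | KW2 => OneBarC end
      | KW2 => match d with K0 => ThreeC | K1 => ZeroC | KW => ZeroC | KW2 => GammaPl end
      end
    end
  end.

Definition allV : seq V4 :=
  [:: mkV K0 K0 K0 K0;
     mkV K0 K0 K0 K1;
     mkV K0 K0 K0 KW;
     mkV K0 K0 K0 KW2;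
     mkV K0 K0 K1 K0;
     mkV K0 K0 K1 K1;
     mkV K0 K0 K1 KW;
     mkV K0 K0 K1 KW2;
     mkV K0 K0 KW K0;
     mkV K0 K0 KW K1;
     mkV K0 K0 KW KW;
     mkV K0 K0 KW KW2;
     mkV K0 K0 KW2 K0;
     mkV K0 K0 KW2 K1;
     mkV K0 K0 KW2 KW;
     mkV K0 K0 KW2 KW2;
     mkV K0 K1 K0 K0;
     mkV K0 K1 K0 K1;
     mkV K0 K1 K0 KW;
     mkV K0 K1 K0 KW2;
     mkV K0 K1 K1 K0;
     mkV K0 K1 K1 K1;
     mkV K0 K1 K1 KW;
     mkV K0 K1 K1 KW2;
     mkV K0 K1 KW K0;
     mkV K0 K1 KW K1;
     mkV K0 K1 KW KW;
     mkV K0 K1 KW KW2;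
     mkV K0 K1 KW2 K0;
     mkV K0 K1 KW2 K1;
     mkV K0 K1 KW2 KW;
     mkV K0 K1 KW2 KW2;
     mkV K0 KW K0 K0;
     mkV K0 KW K0 K1;
     mkV K0 KW K0 KW;
     mkV K0 KW K0 KW2;
     mkV K0 KW K1 K0;
     mkV K0 KW K1 K1;
     mkV K0 KW K1 KW;
     mkV K0 KW K1 KW2;
     mkV K0 KW KW K0;
     mkV K0 KW KW K1;
     mkV K0 KW KW KW;
     mkV K0 KW KW KW2;
     mkV K0 KW KW2 K0;
     mkV K0 KW KW2 K1;
     mkV K0 KW KW2 KW;
     mkV K0 KW KW2 KW2;
     mkV K0 KW2 K0 K0;
     mkV K0 KW2 K0 K1;
     mkV K0 KW2 K0 KW;
     mkV K0 KW2 K0 KW2;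
     mkV K0 KW2 K1 K0;
     mkV K0 KW2 K1 K1;
     mkV K0 KW2 K1 KW;
     mkV K0 KW2 K1 KW2;
     mkV K0 KW2 KW K0;
     mkV K0 KW2 KW K1;
     mkV K0 KW2 KW KW;
     mkV K0 KW2 KW KW2;
     mkV K0 KW2 KW2 K0;
     mkV K0 KW2 KW2 K1;
     mkV K0 KW2 KW2 KW;
     mkV K0 KW2 KW2 KW2;
     mkV K1 K0 K0 K0;
     mkV K1 K0 K0 K1;
     mkV K1 K0 K0 KW;
     mkV K1 K0 K0 KW2;
     mkV K1 K0 K1 K0;
     mkV K1 K0 K1 K1;
     mkV K1 K0 K1 KW;
     mkV K1 K0 K1 KW2;
     mkV K1 K0 KW K0;
     mkV K1 K0 KW K1;
     mkV K1 K0 KW KW;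
     mkV K1 K0 KW KW2;
     mkV K1 K0 KW2 K0;
     mkV K1 K0 KW2 K1;
     mkV K1 K0 KW2 KW;
     mkV K1 K0 KW2 KW2;
     mkV K1 K1 K0 K0;
     mkV K1 K1 K0 K1;
     mkV K1 K1 K0 KW;
     mkV K1 K1 K0 KW2;
     mkV K1 K1 K1 K0;
     mkV K1 K1 K1 K1;
     mkV K1 K1 K1 KW;
     mkV K1 K1 K1 KW2;
     mkV K1 K1 KW K0;
     mkV K1 K1 KW K1;
     mkV K1 K1 KW KW;
     mkV K1 K1 KW KW2;
     mkV K1 K1 KW2 K0;
     mkV K1 K1 KW2 K1;
     mkV K1 K1 KW2 KW;
     mkV K1 K1 KW2 KW2;
     mkV K1 KW K0 K0;
     mkV K1 KW K0 K1;
     mkV K1 KW K0 KW;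
     mkV K1 KW K0 KW2;
     mkV K1 KW K1 K0;
     mkV K1 KW K1 K1;
     mkV K1 KW K1 KW;
     mkV K1 KW K1 KW2;
     mkV K1 KW KW K0;
     mkV K1 KW KW K1;
     mkV K1 KW KW KW;
     mkV K1 KW KW KW2;
     mkV K1 KW KW2 K0;
     mkV K1 KW KW2 K1;
     mkV K1 KW KW2 KW;
     mkV K1 KW KW2 KW2;
     mkV K1 KW2 K0 K0;
     mkV K1 KW2 K0 K1;
     mkV K1 KW2 K0 KW;
     mkV K1 KW2 K0 KW2;
     mkV K1 KW2 K1 K0;
     mkV K1 KW2 K1 K1;
     mkV K1 KW2 K1 KW;
     mkV K1 KW2 K1 KW2;
     mkV K1 KW2 KW K0;
     mkV K1 KW2 KW K1;
     mkV K1 KW2 KW KW;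
     mkV K1 KW2 KW KW2;
     mkV K1 KW2 KW2 K0;
     mkV K1 KW2 KW2 K1;
     mkV K1 KW2 KW2 KW;
     mkV K1 KW2 KW2 KW2;
     mkV KW K0 K0 K0;
     mkV KW K0 K0 K1;
     mkV KW K0 K0 KW;
     mkV KW K0 K0 KW2;
     mkV KW K0 K1 K0;
     mkV KW K0 K1 K1;
     mkV KW K0 K1 KW;
     mkV KW K0 K1 KW2;
     mkV KW K0 KW K0;
     mkV KW K0 KW K1;
     mkV KW K0 KW KW;
     mkV KW K0 KW KW2;
     mkV KW K0 KW2 K0;
     mkV KW K0 KW2 K1;
     mkV KW K0 KW2 KW;
     mkV KW K0 KW2 KW2;
     mkV KW K1 K0 K0;
     mkV KW K1 K0 K1;
     mkV KW K1 K0 KW;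
     mkV KW K1 K0 KW2;
     mkV KW K1 K1 K0;
     mkV KW K1 K1 K1;
     mkV KW K1 K1 KW;
     mkV KW K1 K1 KW2;
     mkV KW K1 KW K0;
     mkV KW K1 KW K1;
     mkV KW K1 KW KW;
     mkV KW K1 KW KW2;
     mkV KW K1 KW2 K0;
     mkV KW K1 KW2 K1;
     mkV KW K1 KW2 KW;
     mkV KW K1 KW2 KW2;
     mkV KW KW K0 K0;
     mkV KW KW K0 K1;
     mkV KW KW K0 KW;
     mkV KW KW K0 KW2;
     mkV KW KW K1 K0;
     mkV KW KW K1 K1;
     mkV KW KW K1 KW;
     mkV KW KW K1 KW2;
     mkV KW KW KW K0;
     mkV KW KW KW K1;
     mkV KW KW KW KW;
     mkV KW KW KW KW2;
     mkV KW KW KW2 K0;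
     mkV KW KW KW2 K1;
     mkV KW KW KW2 KW;
     mkV KW KW KW2 KW2;
     mkV KW KW2 K0 K0;
     mkV KW KW2 K0 K1;
     mkV KW KW2 K0 KW;
     mkV KW KW2 K0 KW2;
     mkV KW KW2 K1 K0;
     mkV KW KW2 K1 K1;
     mkV KW KW2 K1 KW;
     mkV KW KW2 K1 KW2;
     mkV KW KW2 KW K0;
     mkV KW KW2 KW K1;
     mkV KW KW2 KW KW;
     mkV KW KW2 KW KW2;
     mkV KW KW2 KW2 K0;
     mkV KW KW2 KW2 K1;
     mkV KW KW2 KW2 KW;
     mkV KW KW2 KW2 KW2;
     mkV KW2 K0 K0 K0;
     mkV KW2 K0 K0 K1;
     mkV KW2 K0 K0 KW;
     mkV KW2 K0 K0 KW2;
     mkV KW2 K0 K1 K0;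
     mkV KW2 K0 K1 K1;
     mkV KW2 K0 K1 KW;
     mkV KW2 K0 K1 KW2;
     mkV KW2 K0 KW K0;
     mkV KW2 K0 KW K1;
     mkV KW2 K0 KW KW;
     mkV KW2 K0 KW KW2;
     mkV KW2 K0 KW2 K0;
     mkV KW2 K0 KW2 K1;
     mkV KW2 K0 KW2 KW;
     mkV KW2 K0 KW2 KW2;
     mkV KW2 K1 K0 K0;
     mkV KW2 K1 K0 K1;
     mkV KW2 K1 K0 KW;
     mkV KW2 K1 K0 KW2;
     mkV KW2 K1 K1 K0;
     mkV KW2 K1 K1 K1;
     mkV KW2 K1 K1 KW;
     mkV KW2 K1 K1 KW2;
     mkV KW2 K1 KW K0;
     mkV KW2 K1 KW K1;
     mkV KW2 K1 KW KW;
     mkV KW2 K1 KW KW2;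
     mkV KW2 K1 KW2 K0;
     mkV KW2 K1 KW2 K1;
     mkV KW2 K1 KW2 KW;
     mkV KW2 K1 KW2 KW2;
     mkV KW2 KW K0 K0;
     mkV KW2 KW K0 K1;
     mkV KW2 KW K0 KW;
     mkV KW2 KW K0 KW2;
     mkV KW2 KW K1 K0;
     mkV KW2 KW K1 K1;
     mkV KW2 KW K1 KW;
     mkV KW2 KW K1 KW2;
     mkV KW2 KW KW K0;
     mkV KW2 KW KW K1;
     mkV KW2 KW KW KW;
     mkV KW2 KW KW KW2;
     mkV KW2 KW KW2 K0;
     mkV KW2 KW KW2 K1;
     mkV KW2 KW KW2 KW;
     mkV KW2 KW KW2 KW2;
     mkV KW2 KW2 K0 K0;
     mkV KW2 KW2 K0 K1;
     mkV KW2 KW2 K0 KW;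
     mkV KW2 KW2 K0 KW2;
     mkV KW2 KW2 K1 K0;
     mkV KW2 KW2 K1 K1;
     mkV KW2 KW2 K1 KW;
     mkV KW2 KW2 K1 KW2;
     mkV KW2 KW2 KW K0;
     mkV KW2 KW2 KW K1;
     mkV KW2 KW2 KW KW;
     mkV KW2 KW2 KW KW2;
     mkV KW2 KW2 KW2 K0;
     mkV KW2 KW2 KW2 K1;
     mkV KW2 KW2 KW2 KW;
     mkV KW2 KW2 KW2 KW2].

Definition nzV : seq V4 :=
  [:: mkV K0 K0 K0 K1;
     mkV K0 K0 K0 KW;
     mkV K0 K0 K0 KW2;
     mkV K0 K0 K1 K0;
     mkV K0 K0 K1 K1;
     mkV K0 K0 K1 KW;
     mkV K0 K0 K1 KW2;
     mkV K0 K0 KW K0;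
     mkV K0 K0 KW K1;
     mkV K0 K0 KW KW;
     mkV K0 K0 KW KW2;
     mkV K0 K0 KW2 K0;
     mkV K0 K0 KW2 K1;
     mkV K0 K0 KW2 KW;
     mkV K0 K0 KW2 KW2;
     mkV K0 K1 K0 K0;
     mkV K0 K1 K0 K1;
     mkV K0 K1 K0 KW;
     mkV K0 K1 K0 KW2;
     mkV K0 K1 K1 K0;
     mkV K0 K1 K1 K1;
     mkV K0 K1 K1 KW;
     mkV K0 K1 K1 KW2;
     mkV K0 K1 KW K0;
     mkV K0 K1 KW K1;
     mkV K0 K1 KW KW;
     mkV K0 K1 KW KW2;
     mkV K0 K1 KW2 K0;
     mkV K0 K1 KW2 K1;
     mkV K0 K1 KW2 KW;
     mkV K0 K1 KW2 KW2;
     mkV K0 KW K0 K0;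
     mkV K0 KW K0 K1;
     mkV K0 KW K0 KW;
     mkV K0 KW K0 KW2;
     mkV K0 KW K1 K0;
     mkV K0 KW K1 K1;
     mkV K0 KW K1 KW;
     mkV K0 KW K1 KW2;
     mkV K0 KW KW K0;
     mkV K0 KW KW K1;
     mkV K0 KW KW KW;
     mkV K0 KW KW KW2;
     mkV K0 KW KW2 K0;
     mkV K0 KW KW2 K1;
     mkV K0 KW KW2 KW;
     mkV K0 KW KW2 KW2;
     mkV K0 KW2 K0 K0;
     mkV K0 KW2 K0 K1;
     mkV K0 KW2 K0 KW;
     mkV K0 KW2 K0 KW2;
     mkV K0 KW2 K1 K0;
     mkV K0 KW2 K1 K1;
     mkV K0 KW2 K1 KW;
     mkV K0 KW2 K1 KW2;
     mkV K0 KW2 KW K0;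
     mkV K0 KW2 KW K1;
     mkV K0 KW2 KW KW;
     mkV K0 KW2 KW KW2;
     mkV K0 KW2 KW2 K0;
     mkV K0 KW2 KW2 K1;
     mkV K0 KW2 KW2 KW;
     mkV K0 KW2 KW2 KW2;
     mkV K1 K0 K0 K0;
     mkV K1 K0 K0 K1;
     mkV K1 K0 K0 KW;
     mkV K1 K0 K0 KW2;
     mkV K1 K0 K1 K0;
     mkV K1 K0 K1 K1;
     mkV K1 K0 K1 KW;
     mkV K1 K0 K1 KW2;
     mkV K1 K0 KW K0;
     mkV K1 K0 KW K1;
     mkV K1 K0 KW KW;
     mkV K1 K0 KW KW2;
     mkV K1 K0 KW2 K0;
     mkV K1 K0 KW2 K1;
     mkV K1 K0 KW2 KW;
     mkV K1 K0 KW2 KW2;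
     mkV K1 K1 K0 K0;
     mkV K1 K1 K0 K1;
     mkV K1 K1 K0 KW;
     mkV K1 K1 K0 KW2;
     mkV K1 K1 K1 K0;
     mkV K1 K1 K1 K1;
     mkV K1 K1 K1 KW;
     mkV K1 K1 K1 KW2;
     mkV K1 K1 KW K0;
     mkV K1 K1 KW K1;
     mkV K1 K1 KW KW;
     mkV K1 K1 KW KW2;
     mkV K1 K1 KW2 K0;
     mkV K1 K1 KW2 K1;
     mkV K1 K1 KW2 KW;
     mkV K1 K1 KW2 KW2;
     mkV K1 KW K0 K0;
     mkV K1 KW K0 K1;
     mkV K1 KW K0 KW;
     mkV K1 KW K0 KW2;
     mkV K1 KW K1 K0;
     mkV K1 KW K1 K1;
     mkV K1 KW K1 KW;
     mkV K1 KW K1 KW2;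
     mkV K1 KW KW K0;
     mkV K1 KW KW K1;
     mkV K1 KW KW KW;
     mkV K1 KW KW KW2;
     mkV K1 KW KW2 K0;
     mkV K1 KW KW2 K1;
     mkV K1 KW KW2 KW;
     mkV K1 KW KW2 KW2;
     mkV K1 KW2 K0 K0;
     mkV K1 KW2 K0 K1;
     mkV K1 KW2 K0 KW;
     mkV K1 KW2 K0 KW2;
     mkV K1 KW2 K1 K0;
     mkV K1 KW2 K1 K1;
     mkV K1 KW2 K1 KW;
     mkV K1 KW2 K1 KW2;
     mkV K1 KW2 KW K0;
     mkV K1 KW2 KW K1;
     mkV K1 KW2 KW KW;
     mkV K1 KW2 KW KW2;
     mkV K1 KW2 KW2 K0;
     mkV K1 KW2 KW2 K1;
     mkV K1 KW2 KW2 KW;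
     mkV K1 KW2 KW2 KW2;
     mkV KW K0 K0 K0;
     mkV KW K0 K0 K1;
     mkV KW K0 K0 KW;
     mkV KW K0 K0 KW2;
     mkV KW K0 K1 K0;
     mkV KW K0 K1 K1;
     mkV KW K0 K1 KW;
     mkV KW K0 K1 KW2;
     mkV KW K0 KW K0;
     mkV KW K0 KW K1;
     mkV KW K0 KW KW;
     mkV KW K0 KW KW2;
     mkV KW K0 KW2 K0;
     mkV KW K0 KW2 K1;
     mkV KW K0 KW2 KW;
     mkV KW K0 KW2 KW2;
     mkV KW K1 K0 K0;
     mkV KW K1 K0 K1;
     mkV KW K1 K0 KW;
     mkV KW K1 K0 KW2;
     mkV KW K1 K1 K0;
     mkV KW K1 K1 K1;
     mkV KW K1 K1 KW;
     mkV KW K1 K1 KW2;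
     mkV KW K1 KW K0;
     mkV KW K1 KW K1;
     mkV KW K1 KW KW;
     mkV KW K1 KW KW2;
     mkV KW K1 KW2 K0;
     mkV KW K1 KW2 K1;
     mkV KW K1 KW2 KW;
     mkV KW K1 KW2 KW2;
     mkV KW KW K0 K0;
     mkV KW KW K0 K1;
     mkV KW KW K0 KW;
     mkV KW KW K0 KW2;
     mkV KW KW K1 K0;
     mkV KW KW K1 K1;
     mkV KW KW K1 KW;
     mkV KW KW K1 KW2;
     mkV KW KW KW K0;
     mkV KW KW KW K1;
     mkV KW KW KW KW;
     mkV KW KW KW KW2;
     mkV KW KW KW2 K0;
     mkV KW KW KW2 K1;
     mkV KW KW KW2 KW;
     mkV KW KW KW2 KW2;
     mkV KW KW2 K0 K0;
     mkV KW KW2 K0 K1;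
     mkV KW KW2 K0 KW;
     mkV KW KW2 K0 KW2;
     mkV KW KW2 K1 K0;
     mkV KW KW2 K1 K1;
     mkV KW KW2 K1 KW;
     mkV KW KW2 K1 KW2;
     mkV KW KW2 KW K0;
     mkV KW KW2 KW K1;
     mkV KW KW2 KW KW;
     mkV KW KW2 KW KW2;
     mkV KW KW2 KW2 K0;
     mkV KW KW2 KW2 K1;
     mkV KW KW2 KW2 KW;
     mkV KW KW2 KW2 KW2;
     mkV KW2 K0 K0 K0;
     mkV KW2 K0 K0 K1;
     mkV KW2 K0 K0 KW;
     mkV KW2 K0 K0 KW2;
     mkV KW2 K0 K1 K0;
     mkV KW2 K0 K1 K1;
     mkV KW2 K0 K1 KW;
     mkV KW2 K0 K1 KW2;
     mkV KW2 K0 KW K0;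
     mkV KW2 K0 KW K1;
     mkV KW2 K0 KW KW;
     mkV KW2 K0 KW KW2;
     mkV KW2 K0 KW2 K0;
     mkV KW2 K0 KW2 K1;
     mkV KW2 K0 KW2 KW;
     mkV KW2 K0 KW2 KW2;
     mkV KW2 K1 K0 K0;
     mkV KW2 K1 K0 K1;
     mkV KW2 K1 K0 KW;
     mkV KW2 K1 K0 KW2;
     mkV KW2 K1 K1 K0;
     mkV KW2 K1 K1 K1;
     mkV KW2 K1 K1 KW;
     mkV KW2 K1 K1 KW2;
     mkV KW2 K1 KW K0;
     mkV KW2 K1 KW K1;
     mkV KW2 K1 KW KW;
     mkV KW2 K1 KW KW2;
     mkV KW2 K1 KW2 K0;
     mkV KW2 K1 KW2 K1;
     mkV KW2 K1 KW2 KW;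
     mkV KW2 K1 KW2 KW2;
     mkV KW2 KW K0 K0;
     mkV KW2 KW K0 K1;
     mkV KW2 KW K0 KW;
     mkV KW2 KW K0 KW2;
     mkV KW2 KW K1 K0;
     mkV KW2 KW K1 K1;
     mkV KW2 KW K1 KW;
     mkV KW2 KW K1 KW2;
     mkV KW2 KW KW K0;
     mkV KW2 KW KW K1;
     mkV KW2 KW KW KW;
     mkV KW2 KW KW KW2;
     mkV KW2 KW KW2 K0;
     mkV KW2 KW KW2 K1;
     mkV KW2 KW KW2 KW;
     mkV KW2 KW KW2 KW2;
     mkV KW2 KW2 K0 K0;
     mkV KW2 KW2 K0 K1;
     mkV KW2 KW2 K0 KW;
     mkV KW2 KW2 K0 KW2;
     mkV KW2 KW2 K1 K0;
     mkV KW2 KW2 K1 K1;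
     mkV KW2 KW2 K1 KW;
     mkV KW2 KW2 K1 KW2;
     mkV KW2 KW2 KW K0;
     mkV KW2 KW2 KW K1;
     mkV KW2 KW2 KW KW;
     mkV KW2 KW2 KW KW2;
     mkV KW2 KW2 KW2 K0;
     mkV KW2 KW2 KW2 K1;
     mkV KW2 KW2 KW2 KW;
     mkV KW2 KW2 KW2 KW2].

Definition goodL : seq V4 :=
  [:: mkV K0 K1 K1 K0;
     mkV K0 K1 K1 K1;
     mkV K0 K1 K1 KW;
     mkV K0 K1 K1 KW2;
     mkV K0 K1 KW K0;
     mkV K0 K1 KW K1;
     mkV K0 K1 KW KW;
     mkV K0 K1 KW KW2;
     mkV K0 K1 KW2 K0;
     mkV K0 K1 KW2 K1;
     mkV K0 K1 KW2 KW;
     mkV K0 K1 KW2 KW2;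
     mkV K0 KW K1 K0;
     mkV K0 KW K1 K1;
     mkV K0 KW K1 KW;
     mkV K0 KW K1 KW2;
     mkV K0 KW KW K0;
     mkV K0 KW KW K1;
     mkV K0 KW KW KW;
     mkV K0 KW KW KW2;
     mkV K0 KW KW2 K0;
     mkV K0 KW KW2 K1;
     mkV K0 KW KW2 KW;
     mkV K0 KW KW2 KW2;
     mkV K0 KW2 K1 K0;
     mkV K0 KW2 K1 K1;
     mkV K0 KW2 K1 KW;
     mkV K0 KW2 K1 KW2;
     mkV K0 KW2 KW K0;
     mkV K0 KW2 KW K1;
     mkV K0 KW2 KW KW;
     mkV K0 KW2 KW KW2;
     mkV K0 KW2 KW2 K0;
     mkV K0 KW2 KW2 K1;
     mkV K0 KW2 KW2 KW;
     mkV K0 KW2 KW2 KW2;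
     mkV K1 K0 K0 K1;
     mkV K1 K0 K0 KW;
     mkV K1 K0 K0 KW2;
     mkV K1 K0 K1 K1;
     mkV K1 K0 K1 KW;
     mkV K1 K0 K1 KW2;
     mkV K1 K0 KW K1;
     mkV K1 K0 KW KW;
     mkV K1 K0 KW KW2;
     mkV K1 K0 KW2 K1;
     mkV K1 K0 KW2 KW;
     mkV K1 K0 KW2 KW2;
     mkV K1 K1 K0 K1;
     mkV K1 K1 K0 KW;
     mkV K1 K1 K0 KW2;
     mkV K1 K1 K1 K0;
     mkV K1 K1 K1 KW;
     mkV K1 K1 K1 KW2;
     mkV K1 K1 KW K0;
     mkV K1 K1 KW K1;
     mkV K1 K1 KW KW2;
     mkV K1 K1 KW2 K0;
     mkV K1 K1 KW2 K1;
     mkV K1 K1 KW2 KW;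
     mkV K1 KW K0 K1;
     mkV K1 KW K0 KW;
     mkV K1 KW K0 KW2;
     mkV K1 KW K1 K0;
     mkV K1 KW K1 K1;
     mkV K1 KW K1 KW2;
     mkV K1 KW KW K0;
     mkV K1 KW KW K1;
     mkV K1 KW KW KW;
     mkV K1 KW KW2 K0;
     mkV K1 KW KW2 KW;
     mkV K1 KW KW2 KW2;
     mkV K1 KW2 K0 K1;
     mkV K1 KW2 K0 KW;
     mkV K1 KW2 K0 KW2;
     mkV K1 KW2 K1 K0;
     mkV K1 KW2 K1 K1;
     mkV K1 KW2 K1 KW;
     mkV K1 KW2 KW K0;
     mkV K1 KW2 KW KW;
     mkV K1 KW2 KW KW2;
     mkV K1 KW2 KW2 K0;
     mkV K1 KW2 KW2 K1;
     mkV K1 KW2 KW2 KW2;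
     mkV KW K0 K0 K1;
     mkV KW K0 K0 KW;
     mkV KW K0 K0 KW2;
     mkV KW K0 K1 K1;
     mkV KW K0 K1 KW;
     mkV KW K0 K1 KW2;
     mkV KW K0 KW K1;
     mkV KW K0 KW KW;
     mkV KW K0 KW KW2;
     mkV KW K0 KW2 K1;
     mkV KW K0 KW2 KW;
     mkV KW K0 KW2 KW2;
     mkV KW K1 K0 K1;
     mkV KW K1 K0 KW;
     mkV KW K1 K0 KW2;
     mkV KW K1 K1 K0;
     mkV KW K1 K1 K1;
     mkV KW K1 K1 KW;
     mkV KW K1 KW K0;
     mkV KW K1 KW KW;
     mkV KW K1 KW KW2;
     mkV KW K1 KW2 K0;
     mkV KW K1 KW2 K1;
     mkV KW K1 KW2 KW2;
     mkV KW KW K0 K1;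
     mkV KW KW K0 KW;
     mkV KW KW K0 KW2;
     mkV KW KW K1 K0;
     mkV KW KW K1 KW;
     mkV KW KW K1 KW2;
     mkV KW KW KW K0;
     mkV KW KW KW K1;
     mkV KW KW KW KW2;
     mkV KW KW KW2 K0;
     mkV KW KW KW2 K1;
     mkV KW KW KW2 KW;
     mkV KW KW2 K0 K1;
     mkV KW KW2 K0 KW;
     mkV KW KW2 K0 KW2;
     mkV KW KW2 K1 K0;
     mkV KW KW2 K1 K1;
     mkV KW KW2 K1 KW2;
     mkV KW KW2 KW K0;
     mkV KW KW2 KW K1;
     mkV KW KW2 KW KW;
     mkV KW KW2 KW2 K0;
     mkV KW KW2 KW2 KW;
     mkV KW KW2 KW2 KW2;
     mkV KW2 K0 K0 K1;
     mkV KW2 K0 K0 KW;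
     mkV KW2 K0 K0 KW2;
     mkV KW2 K0 K1 K1;
     mkV KW2 K0 K1 KW;
     mkV KW2 K0 K1 KW2;
     mkV KW2 K0 KW K1;
     mkV KW2 K0 KW KW;
     mkV KW2 K0 KW KW2;
     mkV KW2 K0 KW2 K1;
     mkV KW2 K0 KW2 KW;
     mkV KW2 K0 KW2 KW2;
     mkV KW2 K1 K0 K1;
     mkV KW2 K1 K0 KW;
     mkV KW2 K1 K0 KW2;
     mkV KW2 K1 K1 K0;
     mkV KW2 K1 K1 K1;
     mkV KW2 K1 K1 KW2;
     mkV KW2 K1 KW K0;
     mkV KW2 K1 KW K1;
     mkV KW2 K1 KW KW;
     mkV KW2 K1 KW2 K0;
     mkV KW2 K1 KW2 KW;
     mkV KW2 K1 KW2 KW2;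
     mkV KW2 KW K0 K1;
     mkV KW2 KW K0 KW;
     mkV KW2 KW K0 KW2;
     mkV KW2 KW K1 K0;
     mkV KW2 KW K1 K1;
     mkV KW2 KW K1 KW;
     mkV KW2 KW KW K0;
     mkV KW2 KW KW KW;
     mkV KW2 KW KW KW2;
     mkV KW2 KW KW2 K0;
     mkV KW2 KW KW2 K1;
     mkV KW2 KW KW2 KW2;
     mkV KW2 KW2 K0 K1;
     mkV KW2 KW2 K0 KW;
     mkV KW2 KW2 K0 KW2;
     mkV KW2 KW2 K1 K0;
     mkV KW2 KW2 K1 KW;
     mkV KW2 KW2 K1 KW2;
     mkV KW2 KW2 KW K0;
     mkV KW2 KW2 KW K1;
     mkV KW2 KW2 KW KW2;
     mkV KW2 KW2 KW2 K0;
     mkV KW2 KW2 KW2 K1;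
     mkV KW2 KW2 KW2 KW].

Definition repP (k : point_kind) : V4 :=
  match k with CPt => mkV K0 K0 K0 K1 | TPt => mkV K0 K0 K1 K0 | ThreeG => mkV K0 K1 K1 K0 | OneG => mkV K0 K1 K1 KW | ZeroG => mkV K1 K0 K0 KW end.

Definition repL (k : plane_kind) : V4 :=
  match k with GammaPl => mkV K0 K0 K0 K1 | TwoC => mkV K0 K0 K1 K0 | ThreeC => mkV K0 K1 K1 K0 | OneBarC => mkV K0 K1 K1 KW | ZeroC => mkV K1 K0 K0 KW end.

Fixpoint allL (T : Type) (p : T -> bool) (s : seq T) : bool :=
  if s is x :: s' then (if p x then allL p s' else false) else true.
Lemma allLE T (p : T -> bool) s : allL p s = all p s.
Proof. by elim: s => //= x s IH; case: (p x). Qed.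
Fixpoint hasL (T : Type) (p : T -> bool) (s : seq T) : bool :=
  if s is x :: s' then (if p x then true else hasL p s') else false.
Lemma hasLE T (p : T -> bool) s : hasL p s = has p s.
Proof. by elim: s => //= x s IH; case: (p x). Qed.
Fixpoint beqs (s t : seq bool) : bool :=
  match s, t with
  | nil, nil => true
  | b :: s', c :: t' => if (if b then c else ~~ c) then beqs s' t' else false
  | _, _ => false end.
Lemma beqsE s t : beqs s t = (s == t).
Proof. by elim: s t => [|b s IH] [|c t] //=; rewrite eqseq_cons IH; case: b; case: c. Qed.
Definition inV (v : V4) (s : seq V4) : bool := hasL (fun z => veqb z v) s.

(* Matrices M(a,b,c,d) in char 2 *)
Definition MK (q : V4) : M4 :=
  let: mkV a b c d := q in
  mkM (mkV (kmul a (kmul a a)) (kmul (kmul a a) c) (kmul a (kmul c c)) (kmul c (kmul c c)))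
      (mkV (kmul (kmul a a) b) (kmul (kmul a a) d) (kmul b (kmul c c)) (kmul (kmul c c) d))
      (mkV (kmul a (kmul b b)) (kmul (kmul b b) c) (kmul a (kmul d d)) (kmul c (kmul d d)))
      (mkV (kmul b (kmul b b)) (kmul (kmul b b) d) (kmul b (kmul d d)) (kmul d (kmul d d))).
Definition det2K (q : V4) : K := let: mkV a b c d := q in kadd (kmul a d) (kmul b c).

Definition invOK (A : M4) : bool :=
  let d := entM (mulmmK A (adjK A)) 0 0 in
  knz d && (mulmmK A (adjK A) == scalM d).

Definition GqptsK (A : M4) : bool :=
  all (fun t => has (fun s => proj_eqK (PtK s) (mulvmK (PtK t) A)) allTK) allTK.
Definition GqsurjK (A : M4) : bool :=
  all (fun s => has (fun t => proj_eqK (PtK s) (mulvmK (PtK t) A)) allTK) allTK.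

Definition goodA (A : M4) : bool :=
  invOK A &&
  allL (fun x => pk_eqb (kPt (mulvmK x A)) (kPt x)) nzV &&
  allL (fun c => lk_eqb (kPl (mulvmK c (trK (adjK A)))) (kPl c)) nzV.

Definition candL := [seq scK k (PtK s) | k <- nzK, s <- allTK].
Definition candT (t : option K) := [seq scK k (PtK t) | k <- nzK].

Definition fK (e0 e3 e1 ew : V4) : M4 :=
  let u := vaddK e1 (vaddK e0 e3) in
  let v := vaddK ew (vaddK e0 e3) in
  let r1 := vaddK v (scK KW u) in
  mkM e0 r1 (vaddK u r1) e3.

Definition checkGq : bool :=
  allL (fun e0 => allL (fun e3 => allL (fun e1 => allL (fun ew =>
    let B := fK e0 e3 e1 ew in
    if GqptsK B then if GqsurjK B then goodA B else true else true)
    candL) (candT (Some K1))) (candT (Some K0))) (candT None).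
Lemma checkGq_ok : checkGq = true. Proof. vm_compute. reflexivity. Qed.

Definition kinv (a : K) : K := match a with K0 => K0 | K1 => K1 | KW => KW2 | KW2 => KW end.
Definition leadK (v : V4) : K :=
  let: mkV a b c d := v in if knz a then a else if knz b then b else if knz c then c else d.
Definition normK (v : V4) : V4 := scK (kinv (leadK v)) v.

Definition checkLists : bool :=
  (allV == flatten (map (fun a => flatten (map (fun b => flatten (map (fun c =>
    map (fun d => mkV a b c d) allK) allK)) allK)) allK)) &&
  (nzV == filter vnz allV) && (goodL == filter (fun q => knz (det2K q)) allV).
Lemma checkLists_ok : checkLists = true. Proof. vm_compute. reflexivity. Qed.

Definition checkKind : bool :=
  all (fun v => all (fun k => point_of_kindK k v == vnz v && pk_eqb (kPt v) k) allPK) allV &&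
  all (fun v => all (fun k => plane_of_kindK k v == vnz v && lk_eqb (kPl v) k) allLK) allV &&
  all (fun k => vnz (repP k) && pk_eqb (kPt (repP k)) k) allPK &&
  all (fun k => vnz (repL k) && lk_eqb (kPl (repL k)) k) allLK.
Lemma checkKind_ok : checkKind = true. Proof. vm_compute. reflexivity. Qed.

Definition checkCount : bool :=
  [&& count (plane_of_kindK GammaPl) allV == 15, count (plane_of_kindK TwoC) allV == 60,
      count (plane_of_kindK ThreeC) allV == 30, count (plane_of_kindK OneBarC) allV == 90,
      count (plane_of_kindK ZeroC) allV == 60,
      count (point_of_kindK CPt) allV == 15, count (point_of_kindK TPt) allV == 60,
      count (point_of_kindK ThreeG) allV == 30, count (point_of_kindK OneG) allV == 90
    & count (point_of_kindK ZeroG) allV == 60].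
Lemma checkCount_ok : checkCount = true. Proof. vm_compute. reflexivity. Qed.

Definition checkScale : bool :=
  allL (fun k => allL (fun v => pk_eqb (kPt (scK k v)) (kPt v) && lk_eqb (kPl (scK k v)) (kPl v)) nzV) nzK.
Lemma checkScale_ok : checkScale = true. Proof. vm_compute. reflexivity. Qed.

Definition sig (v : V4) : seq bool := map (fun y => incidK y v) nzV.
Definition checkSig : bool :=
  let SU := map (fun u => (sig u, kPl u)) nzV in
  let SV := map (fun v => (sig v, kPl v)) allV in
  allL (fun a => allL (fun b => if beqs a.1 b.1 then lk_eqb a.2 b.2 else true) SV) SU.
Lemma checkSig_ok : checkSig = true. Proof. vm_compute. reflexivity. Qed.

Definition checkGs : bool := allL (fun q => GqptsK (MK q) && GqsurjK (MK q)) goodL.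
Lemma checkGs_ok : checkGs = true. Proof. vm_compute. reflexivity. Qed.

Definition checkGsKind : bool :=
  allL (fun q => let M := MK q in let Mt := trK M in
    allL (fun x => pk_eqb (kPt (mulvmK x M)) (kPt x) && lk_eqb (kPl (mulvmK x Mt)) (kPl x)) nzV) goodL.
Lemma checkGsKind_ok : checkGsKind = true. Proof. vm_compute. reflexivity. Qed.

Definition oeqb (s t : option K) : bool :=
  match s, t with None, None => true | Some a, Some b => keqb a b | _, _ => false end.
Definition checkTriple : bool :=
  allL (fun s1 => allL (fun s2 => allL (fun s3 =>
    if ~~ oeqb s1 s2 && ~~ oeqb s1 s3 && ~~ oeqb s2 s3 then
      hasL (fun q => let M := MK q in
        proj_eqK (PtK s1) (mulvmK (PtK None) M) &&
        proj_eqK (PtK s2) (mulvmK (PtK (Some K0)) M) &&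
        proj_eqK (PtK s3) (mulvmK (PtK (Some K1)) M)) goodL
    else true) allTK) allTK) allTK.
Lemma checkTriple_ok : checkTriple = true. Proof. vm_compute. reflexivity. Qed.

Definition checkNorm : bool :=
  allL (fun u => allL (fun v => if veqb (normK u) (normK v) then proj_eqK u v else true) nzV) allV.
Lemma checkNorm_ok : checkNorm = true. Proof. vm_compute. reflexivity. Qed.

Definition orbP (x : V4) := map (fun q => normK (mulvmK x (MK q))) goodL.
Definition checkPtOrb : bool :=
  let o1 := orbP (repP CPt) in let o2 := orbP (repP TPt) in let o3 := orbP (repP ThreeG) in
  let o4 := orbP (repP OneG) in let o5 := orbP (repP ZeroG) in
  allL (fun y => inV (normK y)
     (match kPt y with CPt => o1 | TPt => o2 | ThreeG => o3 | OneG => o4 | ZeroG => o5 end)) nzV.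
Lemma checkPtOrb_ok : checkPtOrb = true. Proof. vm_compute. reflexivity. Qed.

Definition orbL (c : V4) := map (fun q => normK (mulvmK c (trK (MK q)))) goodL.
Definition checkPlOrb : bool :=
  let o1 := orbL (repL GammaPl) in let o2 := orbL (repL TwoC) in let o3 := orbL (repL ThreeC) in
  let o4 := orbL (repL OneBarC) in let o5 := orbL (repL ZeroC) in
  allL (fun y => inV (normK y)
     (match kPl y with GammaPl => o1 | TwoC => o2 | ThreeC => o3 | OneBarC => o4 | ZeroC => o5 end)) nzV.
Lemma checkPlOrb_ok : checkPlOrb = true. Proof. vm_compute. reflexivity. Qed.

Import GRing.Theory.
Local Open Scope ring_scope.

Arguments allK : simpl never.
Arguments allTK : simpl never.
Arguments nzK : simpl never.
Arguments allV : simpl never.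
Section FPart.
Variable F : finFieldType.
Hypothesis hF : #|F| = 4%N.

Lemma two0 : (2%:R : F) = 0.
Proof.
have e (x : F) : x ^+ 4 = x by rewrite -hF expf_card.
have h2 := e 2%:R; have h3 := e 3%:R.
rewrite -natrX in h2; rewrite -natrX in h3.
have a : (14%:R : F) = 0.
  by apply: (addIr 2%:R); rewrite -natrD add0r; exact: h2.
have b : (78%:R : F) = 0.
  by apply: (addIr 3%:R); rewrite -natrD add0r; exact: h3.
have : (156%:R : F) = 154%:R + 2%:R by rewrite -natrD.
have -> : (156%:R : F) = 2%:R * 78%:R by rewrite -natrM.
have -> : (154%:R : F) = 11%:R * 14%:R by rewrite -natrM.
by rewrite a b !mulr0 add0r => <-.
Qed.

Lemma three1 : (3%:R : F) = 1.
Proof. by rewrite -[3%N]/(2 + 1)%N natrD two0 add0r. Qed.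

Lemma addrr (x : F) : x + x = 0.
Proof. by rewrite -mulr2n -mulr_natr two0 mulr0. Qed.

Lemma oppr2 (x : F) : - x = x.
Proof. by rewrite -[-x]add0r -(addrr x) addrK. Qed.

Lemma exw : exists w : F, (w != 0) && (w != 1).
Proof.
case: (boolP [exists x : F, (x != 0) && (x != 1)]) => [/existsP //|/existsPn H].
exfalso.
have : (#|F| <= #|[:: (0%R : F); 1%R]|)%N.
  apply: subset_leq_card; apply/subsetP => x _.
  by move: (H x); rewrite !inE negb_and !negbK => /orP[] ->; rewrite ?orbT.
have := card_size [:: (0%R : F); 1%R].
rewrite hF /= => h1 h2; by have := leq_trans h2 h1.
Qed.

Definition w : F := xchoose exw.
Lemma w_prop : (w != 0) && (w != 1). Proof. exact: xchooseP exw. Qed.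
Lemma w_neq0 : w != 0. Proof. by case/andP: w_prop. Qed.
Lemma w_neq1 : w != 1. Proof. by case/andP: w_prop. Qed.

Lemma w3 : w ^+ 3 = 1.
Proof.
apply: (mulfI w_neq0); rewrite -exprS mulr1.
by rewrite -[in RHS](expf_card w) hF.
Qed.

Lemma wsq : w * w = w + 1.
Proof.
have : (w - 1) * (w * w + w + 1) = 0.
  have -> : (w - 1) * (w * w + w + 1) = w ^+ 3 - 1 by ring.
  by rewrite w3 subrr.
move/eqP; rewrite mulf_eq0 subr_eq0 (negbTE w_neq1) /= -addrA addr_eq0 => /eqP ->.
by rewrite oppr2.
Qed.

Definition phi (a : K) : F :=
  match a with K0 => 0 | K1 => 1 | KW => w | KW2 => w + 1 end.

Lemma w1_neq0 : w + 1 != 0.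
Proof. by rewrite addr_eq0 oppr2 w_neq1. Qed.
Lemma w1_neq1 : w + 1 != 1.
Proof. by rewrite -subr_eq0 addrK w_neq0. Qed.
Lemma w1_neqw : w + 1 != w.
Proof. by rewrite -subr_eq0 addrAC subrr add0r oner_eq0. Qed.

Lemma phi_add a b : phi (kadd a b) = phi a + phi b.
Proof.
case: a; case: b; rewrite /= ?add0r ?addr0 ?addrr //.
- by rewrite addrC.
- by rewrite addrCA addrr addr0.
- by rewrite addrA addrr add0r.
- by rewrite -addrA addrr addr0.
- by rewrite addrAC addrr add0r.
Qed.

Lemma wmw1 : w * (w + 1) = 1.
Proof. by rewrite mulrDr mulr1 wsq addrAC addrr add0r. Qed.

Lemma phi_mul a b : phi (kmul a b) = phi a * phi b.
Proof.
case: a; case: b; rewrite /= ?mul0r ?mulr0 ?mul1r ?mulr1 //.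
- by rewrite wsq.
- by rewrite wmw1.
- by rewrite mulrC wmw1.
- by rewrite mulrDl mul1r wmw1 addrCA addrr addr0.
Qed.

Lemma phi_eq0 a : (phi a == 0) = ~~ knz a.
Proof. by case: a; rewrite /= ?eqxx ?oner_eq0 ?(negbTE w_neq0) ?(negbTE w1_neq0). Qed.

Definition psi (x : F) : K :=
  if x == 0 then K0 else if x == 1 then K1 else if x == w then KW else KW2.

Lemma psiK a : psi (phi a) = a.
Proof.
rewrite /psi; case: a => /=; rewrite ?eqxx ?oner_eq0 ?(negbTE w_neq0) ?(negbTE w_neq1) //.
by rewrite (negbTE w1_neq0) (negbTE w1_neq1) (negbTE w1_neqw).
Qed.

Lemma F4 (x : F) : [|| x == 0, x == 1, x == w | x == w + 1].
Proof.
apply/negPn/negP => Hx; exfalso.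
have Hu : uniq [:: x; 0; 1; w; w + 1].
  rewrite /= !inE !negb_or in Hx *.
  rewrite Hx /= eq_sym oner_eq0 eq_sym w_neq0 eq_sym w1_neq0 eq_sym w_neq1 eq_sym w1_neq1.
  by rewrite eq_sym w1_neqw.
have := max_card (mem [:: x; 0; 1; w; w + 1]).
by rewrite (card_uniqP Hu) hF.
Qed.

Lemma phiK x : phi (psi x) = x.
Proof.
rewrite /psi; have := F4 x.
case: eqP => [->//|_]; case: eqP => [->//|_]; case: eqP => [->//|_] /= /eqP -> //.
Qed.

Lemma phi_inj : injective phi.
Proof. by move=> a b H; rewrite -(psiK a) H psiK. Qed.

Notation o0 := (@Ordinal 4 0 isT).
Notation o1 := (@Ordinal 4 1 isT).
Notation o2 := (@Ordinal 4 2 isT).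
Notation o3 := (@Ordinal 4 3 isT).

Definition decV (v : V4) : 'rV[F]_4 := \row_(j < 4) phi (entV v j).
Definition decM (A : M4) : 'M[F]_4 := \matrix_(i < 4, j < 4) phi (entM A i j).
Definition encV (x : 'rV[F]_4) : V4 :=
  mkV (psi (x 0 o0)) (psi (x 0 o1)) (psi (x 0 o2)) (psi (x 0 o3)).
Definition encM (A : 'M[F]_4) : M4 :=
  mkM (mkV (psi (A o0 o0)) (psi (A o0 o1)) (psi (A o0 o2)) (psi (A o0 o3)))
      (mkV (psi (A o1 o0)) (psi (A o1 o1)) (psi (A o1 o2)) (psi (A o1 o3)))
      (mkV (psi (A o2 o0)) (psi (A o2 o1)) (psi (A o2 o2)) (psi (A o2 o3)))
      (mkV (psi (A o3 o0)) (psi (A o3 o1)) (psi (A o3 o2)) (psi (A o3 o3))).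

Ltac ordcase j := case: j => [[|[|[|[|//]]]] ?].

Lemma decV_encV x : decV (encV x) = x.
Proof.
apply/rowP => j; rewrite /vec4 /decV /decM mxE; ordcase j; rewrite /= phiK; congr (x _ _); exact: val_inj.
Qed.

Lemma decM_encM A : decM (encM A) = A.
Proof.
apply/matrixP => i j; rewrite /vec4 /decV /decM mxE.
ordcase i; ordcase j; rewrite /= phiK; congr (A _ _); exact: val_inj.
Qed.

Lemma decV_eqE u v : (decV u == decV v) = (u == v).
Proof.
apply/eqP/eqP => [|->//]; case: u => a b c d; case: v => a' b' c' d' H.
have h0 := congr1 (fun m : 'rV[F]_4 => m 0 o0) H.
have h1 := congr1 (fun m : 'rV[F]_4 => m 0 o1) H.
have h2 := congr1 (fun m : 'rV[F]_4 => m 0 o2) H.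
have h3 := congr1 (fun m : 'rV[F]_4 => m 0 o3) H.
rewrite /= /vec4 /decV /decM !mxE /= in h0 h1 h2 h3.
by rewrite (phi_inj h0) (phi_inj h1) (phi_inj h2) (phi_inj h3).
Qed.

Lemma decV_inj : injective decV.
Proof. by move=> u v /eqP; rewrite decV_eqE => /eqP. Qed.

Lemma encV_decV v : encV (decV v) = v.
Proof. by apply: decV_inj; rewrite decV_encV. Qed.

Lemma decM_inj : injective decM.
Proof.
case=> [[a0 b0 c0 d0] [a1 b1 c1 d1] [a2 b2 c2 d2] [a3 b3 c3 d3]].
case=> [[a0' b0' c0' d0'] [a1' b1' c1' d1'] [a2' b2' c2' d2'] [a3' b3' c3' d3']] H.
have E i j := congr1 (fun m : 'M[F]_4 => m i j) H.
have := E o0 o0; have := E o0 o1; have := E o0 o2; have := E o0 o3.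
have := E o1 o0; have := E o1 o1; have := E o1 o2; have := E o1 o3.
have := E o2 o0; have := E o2 o1; have := E o2 o2; have := E o2 o3.
have := E o3 o0; have := E o3 o1; have := E o3 o2; have := E o3 o3.
rewrite /= /vec4 /decV /decM !mxE /=.
rewrite /entM /rowK /entV /=.
by do 16 move/phi_inj ->.
Qed.

Lemma encM_decM A : encM (decM A) = A.
Proof. by apply: decM_inj; rewrite decM_encM. Qed.

Lemma dec0 : decV (mkV K0 K0 K0 K0) = 0.
Proof. by apply/rowP => j; rewrite /vec4 /decV /decM !mxE; ordcase j. Qed.

Lemma dec_neq0 v : (decV v != 0) = vnz v.
Proof.
rewrite -dec0 decV_eqE; case: v => a b c d /=.
by case: a; case: b; case: c; case: d.
Qed.

Lemma enc_nz x : vnz (encV x) = (x != 0).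
Proof. by rewrite -dec_neq0 decV_encV. Qed.

Ltac phisimp := rewrite ?phi_add ?phi_mul /=.

Lemma vec4_dec a b c d : vec4 (phi a) (phi b) (phi c) (phi d) = decV (mkV a b c d).
Proof. by apply/rowP => j; rewrite /vec4 /decV /decM !mxE; ordcase j. Qed.

Lemma scale_dec k v : phi k *: decV v = decV (scK k v).
Proof. apply/rowP => j; case: v => a b c d; rewrite /vec4 /decV /decM !mxE; ordcase j; by phisimp. Qed.

Lemma add_dec u v : decV u + decV v = decV (vaddK u v).
Proof.
apply/rowP => j; case: u => a b c d; case: v => a' b' c' d'; rewrite /vec4 /decV /decM !mxE; ordcase j; by phisimp.
Qed.

Lemma dot_dec u v : dot (decV u) (decV v) = phi (dotK u v).
Proof.
case: u => a b c d; case: v => a' b' c' d'.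
rewrite /dot !big_ord_recl big_ord0 !mxE /=; phisimp.
by rewrite addr0.
Qed.

Lemma incid_dec u v : incid (decV u) (decV v) = incidK u v.
Proof. by rewrite /incid dot_dec phi_eq0. Qed.

Lemma existsF (P : pred F) : [exists k, P k] = has (fun a => P (phi a)) allK.
Proof.
apply/existsP/hasP => [[k Hk]|[a _ Ha]]; last by exists (phi a).
by exists (psi k); [case: (psi k)|rewrite phiK].
Qed.

Lemma memT (t : option K) : t \in allTK.
Proof. by case: t => [[]|]. Qed.

Lemma omapK t : omap phi (omap psi t) = t.
Proof. by case: t => [t|] //=; rewrite phiK. Qed.

Lemma existsT (P : pred (option F)) : [exists t, P t] = has (fun t => P (omap phi t)) allTK.
Proof.
apply/existsP/hasP => [[t Ht]|[t _ Ht]]; last by exists (omap phi t).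
by exists (omap psi t); [exact: memT|rewrite omapK].
Qed.

Lemma card_cover (T : finType) (s : seq T) (P : pred T) :
  uniq s -> (forall x, x \in s) -> #|[set x | P x]| = count P s.
Proof.
move=> Hu Hc; rewrite -size_filter -(card_uniqP (filter_uniq P Hu)).
by apply: eq_card => x; rewrite inE mem_filter Hc andbT.
Qed.

Lemma cardT (P : pred (option F)) :
  #|[set t | P t]| = count (fun t => P (omap phi t)) allTK.
Proof.
rewrite (@card_cover _ (map (omap phi) allTK)) ?count_map //.
  rewrite map_inj_uniq //; last by move=> [a|] [b|] //= [/phi_inj ->].
move=> t; rewrite -(omapK t); apply: map_f; exact: memT.
Qed.

Lemma allV_full v : v \in allV.
Proof. by case: v => a b c d; case: a; case: b; case: c; case: d; vm_compute. Qed.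

Lemma cardV (P : pred 'rV[F]_4) :
  #|[set c | P c]| = count (fun v => P (decV v)) allV.
Proof.
rewrite (@card_cover _ (map decV allV)) ?count_map //.
  rewrite map_inj_uniq; [by vm_compute|exact: decV_inj].
move=> c; rewrite -(decV_encV c); apply: map_f; exact: allV_full.
Qed.

Lemma proj_dec x y : proj_eq (decV x) (decV y) = proj_eqK x y.
Proof.
rewrite /proj_eq existsF; apply: eq_has => a /=.
by rewrite phi_eq0 negbK scale_dec decV_eqE.
Qed.

Lemma Pt_dec t : Pt (omap phi t) = decV (PtK t).
Proof.
case: t => [t|] /=; last by rewrite -[1]/(phi K1) -[0]/(phi K0) vec4_dec.
apply/rowP => j; rewrite /vec4 /decV /decM !mxE; ordcase j; phisimp; ring.
Qed.

Lemma Tdir_dec t : Tdir (omap phi t) = decV (TdirK t).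
Proof.
case: t => [t|] /=; last by rewrite -[1]/(phi K1) -[0]/(phi K0) vec4_dec.
apply/rowP => j; rewrite /vec4 /decV /decM !mxE; ordcase j; phisimp; rewrite ?three1 ?two0; ring.
Qed.

Lemma Osc_dec t : Osc (omap phi t) = decV (OscK t).
Proof.
case: t => [t|] /=; last by rewrite -[1]/(phi K1) -[0]/(phi K0) vec4_dec.
apply/rowP => j; rewrite /vec4 /decV /decM !mxE; ordcase j; phisimp; rewrite ?three1 ?oppr2; ring.
Qed.

Lemma on_C_dec x : on_C (decV x) = on_CK x.
Proof. by rewrite /on_C existsT; apply: eq_has => t; rewrite /= Pt_dec proj_dec. Qed.

Lemma on_tangent_dec x : on_tangent (decV x) = on_tangentK x.
Proof.
rewrite /on_tangent /on_tangentK existsT; apply: eq_has => t; rewrite existsF; apply: eq_has => a.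
rewrite existsF; apply: eq_has => b.
by rewrite Pt_dec Tdir_dec !scale_dec add_dec decV_eqE.
Qed.

Lemma nC_dec c : nC (decV c) = nCK c.
Proof. by rewrite /nC /nCK cardT; apply: eq_count => t; rewrite /= Pt_dec incid_dec. Qed.

Lemma nG_dec c : nG (decV c) = nGK c.
Proof. by rewrite /nG /nGK cardT; apply: eq_count => t; rewrite /= Osc_dec incid_dec. Qed.

Lemma is_Gamma_dec c : is_Gamma (decV c) = is_GammaK c.
Proof. by rewrite /is_Gamma existsT; apply: eq_has => t; rewrite /= Osc_dec proj_dec. Qed.

Lemma plane_of_kind_dec k c : plane_of_kind k (decV c) = plane_of_kindK k c.
Proof. by rewrite /plane_of_kind /plane_of_kindK dec_neq0 nC_dec is_Gamma_dec. Qed.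

Lemma point_of_kind_dec k c : point_of_kind k (decV c) = point_of_kindK k c.
Proof. by rewrite /point_of_kind /point_of_kindK dec_neq0 on_C_dec on_tangent_dec nG_dec. Qed.

Lemma mulvm_dec x A : decV x *m decM A = decV (mulvmK x A).
Proof.
case: x => x0 x1 x2 x3.
case: A => [[a0 b0 c0 d0] [a1 b1 c1 d1] [a2 b2 c2 d2] [a3 b3 c3 d3]].
apply/rowP => j; rewrite /decV /decM !mxE !big_ord_recl big_ord0 !mxE.
ordcase j; rewrite /entM /rowK /entV /=; phisimp; ring.
Qed.

Lemma mulmm_dec A B : decM A *m decM B = decM (mulmmK A B).
Proof.
case: A => [[a0 b0 c0 d0] [a1 b1 c1 d1] [a2 b2 c2 d2] [a3 b3 c3 d3]].
case: B => [[e0 f0 g0 h0] [e1 f1 g1 h1] [e2 f2 g2 h2] [e3 f3 g3 h3]].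
apply/matrixP => i j; rewrite /decM !mxE !big_ord_recl big_ord0 !mxE.
ordcase i; ordcase j; rewrite /entM /rowK /entV /=; phisimp; ring.
Qed.

Lemma tr_dec A : (decM A)^T = decM (trK A).
Proof.
case: A => [[a0 b0 c0 d0] [a1 b1 c1 d1] [a2 b2 c2 d2] [a3 b3 c3 d3]].
apply/matrixP => i j; rewrite /decM !mxE.
by ordcase i; ordcase j; rewrite /entM /rowK /entV /=.
Qed.

Lemma scal_dec d : (phi d)%:M = decM (scalM d).
Proof.
apply/matrixP => i j; rewrite /decM !mxE.
by ordcase i; ordcase j; rewrite /entM /rowK /entV /= ?mulr1n ?mulr0n.
Qed.

Lemma M_dec a b c d :
  Mabcd (phi a) (phi b) (phi c) (phi d) = decM (MK (mkV a b c d)).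
Proof.
apply/matrixP => i j; rewrite /Mabcd /decM !mxE.
ordcase i; ordcase j; rewrite /entM /rowK /entV /=; phisimp;
  rewrite ?three1 ?two0; ring.
Qed.


Lemma veqbE u v : veqb u v = (u == v). Proof. by []. Qed.

Lemma lists_eq : [/\ allV = flatten (map (fun a => flatten (map (fun b => flatten (map (fun c =>
    map (fun d => mkV a b c d) allK) allK)) allK)) allK),
  nzV = filter vnz allV & goodL = filter (fun q => knz (det2K q)) allV].
Proof. by have := checkLists_ok; rewrite /checkLists => /andP [/andP [/eqP -> /eqP ->] /eqP ->]. Qed.

Lemma mem_nzV v : (v \in nzV) = vnz v.
Proof. by case: lists_eq => _ -> _; rewrite mem_filter allV_full andbT. Qed.

Lemma mem_goodL q : (q \in goodL) = knz (det2K q).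
Proof. by case: lists_eq => _ _ ->; rewrite mem_filter allV_full andbT. Qed.

Lemma kindK_point k v : point_of_kindK k v = vnz v && (kPt v == k).
Proof.
have := checkKind_ok; rewrite /checkKind => /andP [/andP [/andP [/allP /(_ v (allV_full v)) /allP H _] _] _].
by apply/eqP/H; case: k.
Qed.

Lemma kindK_plane k v : plane_of_kindK k v = vnz v && (kPl v == k).
Proof.
have := checkKind_ok; rewrite /checkKind => /andP [/andP [/andP [_ /allP /(_ v (allV_full v)) /allP H] _] _].
by apply/eqP/H; case: k.
Qed.

Lemma repP_ok k : vnz (repP k) && (kPt (repP k) == k).
Proof.
have := checkKind_ok; rewrite /checkKind => /andP [/andP [_ /allP H] _].
by apply: H; case: k.
Qed.

Lemma repL_ok k : vnz (repL k) && (kPl (repL k) == k).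
Proof.
have := checkKind_ok; rewrite /checkKind => /andP [_ /allP H].
by apply: H; case: k.
Qed.

Lemma fK_eq (A : M4) : A = fK (mulvmK (PtK None) A) (mulvmK (PtK (Some K0)) A)
  (mulvmK (PtK (Some K1)) A) (mulvmK (PtK (Some KW)) A).
Proof.
case: A => [[a0 b0 c0 d0] [a1 b1 c1 d1] [a2 b2 c2 d2] [a3 b3 c3 d3]].
rewrite /fK /=; congr mkM; congr mkV;
repeat match goal with |- context [?x] => is_var x;
  match type of x with K => destruct x end end; reflexivity.
Qed.

Lemma cand_mem A t : GqptsK A -> mulvmK (PtK t) A \in candL.
Proof.
move/allP/(_ t (memT t))/hasP => [s Hs /hasP [k _ /andP [Hk /eqP ->]]].
rewrite /candL; apply: (allpairs_f (fun k s => scK k (PtK s))); [by case: k Hk|exact: memT].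
Qed.

Lemma candT_mem k t : k \in nzK -> scK k (PtK t) \in candT t.
Proof. by move=> Hk; rewrite /candT; apply: (map_f (fun k => scK k (PtK t))). Qed.

Lemma Gq_good A : GqptsK A -> GqsurjK A ->
  mulvmK (PtK None) A \in candT None ->
  mulvmK (PtK (Some K0)) A \in candT (Some K0) ->
  mulvmK (PtK (Some K1)) A \in candT (Some K1) -> goodA A.
Proof.
move=> Hp Hs H0 H1 H2; have := checkGq_ok; rewrite /checkGq allLE.
move/allP/(_ _ H0); rewrite allLE.
move/allP/(_ _ H1); rewrite allLE.
move/allP/(_ _ H2); rewrite allLE.
move/allP/(_ _ (cand_mem (Some KW) Hp)).
by rewrite -fK_eq Hp Hs.
Qed.

Lemma norm_proj u v : vnz v -> normK u = normK v -> proj_eqK u v.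
Proof.
move=> Hv E; have := checkNorm_ok; rewrite /checkNorm allLE.
move/allP/(_ u (allV_full u)); rewrite allLE => /allP/(_ v); rewrite mem_nzV Hv.
by move=> /(_ isT); rewrite E veqbE eqxx.
Qed.

Lemma inV_P v s : inV v s -> v \in s.
Proof. by rewrite /inV hasLE => /hasP [z Hz /eqP <-]. Qed.

Definition kindP (x : 'rV[F]_4) := kPt (encV x).
Definition kindL (c : 'rV[F]_4) := kPl (encV c).

Lemma point_kindE k x : point_of_kind k x = (x != 0) && (kindP x == k).
Proof. by rewrite -{1}(decV_encV x) point_of_kind_dec kindK_point enc_nz. Qed.

Lemma plane_kindE k x : plane_of_kind k x = (x != 0) && (kindL x == k).
Proof. by rewrite -{1}(decV_encV x) plane_of_kind_dec kindK_plane enc_nz. Qed.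

Lemma encV_scale k x : encV (k *: x) = scK (psi k) (encV x).
Proof. by rewrite -{1}(decV_encV x) -{1}(phiK k) scale_dec encV_decV. Qed.

Lemma psi_nz k : k != 0 -> psi k \in nzK.
Proof. by rewrite -{1}(phiK k) phi_eq0 negbK; case: (psi k). Qed.

Lemma kind_scale k (x : 'rV[F]_4) : k != 0 -> x != 0 ->
  kindP (k *: x) = kindP x /\ kindL (k *: x) = kindL x.
Proof.
move=> Hk Hx; rewrite /kindP /kindL encV_scale.
have := checkScale_ok; rewrite /checkScale allLE => /allP/(_ _ (psi_nz Hk)).
rewrite allLE => /allP/(_ (encV x)); rewrite mem_nzV enc_nz Hx => /(_ isT).
by case/andP => /eqP -> /eqP ->.
Qed.

Lemma encV_mul x A : encV (x *m A) = mulvmK (encV x) (encM A).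
Proof. by rewrite -{1}(decV_encV x) -{1}(decM_encM A) mulvm_dec encV_decV. Qed.

Lemma proj_eqP (x y : 'rV[F]_4) : proj_eq x y -> exists2 k, k != 0 & y = k *: x.
Proof. by case/existsP => k /andP [Hk /eqP ->]; exists k. Qed.

Lemma proj_eqI (x y : 'rV[F]_4) k : k != 0 -> y = k *: x -> proj_eq x y.
Proof. by move=> Hk ->; apply/existsP; exists k; rewrite Hk eqxx. Qed.

Lemma unit_from (A B : 'M[F]_4) d : A *m B = d%:M -> d != 0 ->
  A \in unitmx /\ B *m A = d%:M.
Proof.
move=> H Hd.
have H1 : A *m (d^-1 *: B) = 1%:M by rewrite -scalemxAr H scale_scalar_mx mulVf.
split; first by case: (mulmx1_unit H1).
have := mulmx1C H1; rewrite -scalemxAl => H2.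
by rewrite -[B *m A]scale1r -(mulfV Hd) -scalerA H2 scalemx1.
Qed.

Lemma invOK_dec AK : invOK AK ->
  exists2 d : F, d != 0 & decM AK *m decM (adjK AK) = d%:M.
Proof.
case/andP => Hd /eqP E; exists (phi (entM (mulmmK AK (adjK AK)) 0 0)).
  by rewrite phi_eq0 negbK.
by rewrite mulmm_dec scal_dec -E.
Qed.

Lemma dotE (x c : 'rV[F]_4) : dot x c = (x *m c^T) 0 0.
Proof. by rewrite /dot mxE; apply: eq_bigr => i _; rewrite mxE. Qed.

Lemma dot_mul (y c : 'rV[F]_4) (B : 'M[F]_4) : dot y (c *m B^T) = dot (y *m B) c.
Proof. by rewrite !dotE trmx_mul trmxK mulmxA. Qed.

Lemma dot_scalel k (y c : 'rV[F]_4) : dot (k *: y) c = k * dot y c.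
Proof. by rewrite /dot mulr_sumr; apply: eq_bigr => i _; rewrite mxE mulrA. Qed.

Lemma dot_scaler k (y c : 'rV[F]_4) : dot y (k *: c) = k * dot y c.
Proof. by rewrite /dot mulr_sumr; apply: eq_bigr => i _; rewrite mxE mulrCA. Qed.

Lemma zero_kind (u v : 'rV[F]_4) : u != 0 -> (forall y, y != 0 -> incid y u = incid y v) ->
  kindL u = kindL v.
Proof.
move=> Hu H.
have Hs : sig (encV u) = sig (encV v).
  rewrite /sig; apply/eq_in_map => y; rewrite mem_nzV => Hy.
  by rewrite -!incid_dec !decV_encV H // dec_neq0.
have := checkSig_ok; rewrite /checkSig; cbv zeta; rewrite allLE.
move/allP/(_ (sig (encV u), kPl (encV u))).
have Hu' : encV u \in nzV by rewrite mem_nzV enc_nz.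
move/(_ (map_f (fun u => (sig u, kPl u)) Hu')); rewrite allLE.
move/allP/(_ (sig (encV v), kPl (encV v)) (map_f (fun v => (sig v, kPl v)) (allV_full _))).
rewrite -[(sig (encV u), kPl (encV u)).1]/(sig (encV u)).
rewrite -[(sig (encV v), kPl (encV v)).1]/(sig (encV v)) Hs beqsE eqxx.
by move/eqP.
Qed.

Lemma Mmul (a b c d a' b' c' d' : F) :
  Mabcd a b c d *m Mabcd a' b' c' d' =
  Mabcd (a*a'+c*b') (b*a'+d*b') (a*c'+c*d') (b*c'+d*d').
Proof.
apply/matrixP => i j; rewrite /Mabcd !mxE !big_ord_recl big_ord0 !mxE.
ordcase i; ordcase j; rewrite /=; ring.
Qed.

Lemma Mdiag (e : F) : Mabcd e 0 0 e = (e ^+ 3)%:M.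
Proof.
apply/matrixP => i j; rewrite /Mabcd !mxE.
ordcase i; ordcase j; rewrite /= ?mulr1n ?mulr0n; ring.
Qed.

Lemma Gs_mul (A B : 'M[F]_4) : in_Gstar A -> in_Gstar B -> in_Gstar (A *m B).
Proof.
case=> a [b [c [d [Hd ->]]]] [a' [b' [c' [d' [Hd' ->]]]]].
rewrite Mmul; do 4 eexists; split; last by reflexivity.
have -> : (a * a' + c * b') * (b * c' + d * d') - (b * a' + d * b') * (a * c' + c * d')
  = (a * d - b * c) * (a' * d' - b' * c') by ring.
by rewrite mulf_neq0.
Qed.

Lemma Gs_inv (A : 'M[F]_4) : in_Gstar A ->
  exists B (e : F), [/\ in_Gstar B, e != 0, A *m B = e%:M & B *m A = e%:M].
Proof.
case=> a [b [c [d [Hd ->]]]].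
have He : (a * d - b * c) ^+ 3 != 0 by rewrite expf_neq0.
have E : Mabcd a b c d *m Mabcd d (- b) (- c) a = ((a * d - b * c) ^+ 3)%:M.
  rewrite Mmul -Mdiag; congr Mabcd; ring.
exists (Mabcd d (- b) (- c) a), ((a * d - b * c) ^+ 3); split => //.
- exists d, (- b), (- c), a; split => //.
  by have -> : d * a - - b * - c = a * d - b * c by ring.
- by case: (unit_from E He).
Qed.

Lemma Gs_enc (A : 'M[F]_4) : in_Gstar A -> exists2 q, q \in goodL & A = decM (MK q).
Proof.
case=> a [b [c [d [Hd ->]]]].
exists (mkV (psi a) (psi b) (psi c) (psi d)).
  rewrite mem_goodL /=.
  move: Hd; rewrite -{1}(phiK a) -{1}(phiK b) -{1}(phiK c) -{1}(phiK d).
  by rewrite oppr2 -!phi_mul -phi_add phi_eq0 negbK.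
by rewrite -M_dec !phiK.
Qed.

Lemma Gs_of_good q : q \in goodL -> in_Gstar (decM (MK q)).
Proof.
case: q => a b c d; rewrite mem_goodL => Hq.
exists (phi a), (phi b), (phi c), (phi d); split; last by rewrite M_dec.
by rewrite oppr2 -!phi_mul -phi_add phi_eq0 negbK.
Qed.

Lemma GqK_dec AK : decM AK \in unitmx -> GqptsK AK -> GqsurjK AK -> in_Gq (decM AK).
Proof.
move=> Hi Hp Hs; split => //; split.
- move=> t; move/allP: Hp => /(_ (omap psi t) (memT _)) /hasP [s _ Hs'].
  exists (omap phi s); by rewrite -{1}(omapK t) Pt_dec Pt_dec mulvm_dec proj_dec.
- move=> s; move/allP: Hs => /(_ (omap psi s) (memT _)) /hasP [t _ Ht].
  exists (omap phi t); by rewrite -{1}(omapK s) Pt_dec Pt_dec mulvm_dec proj_dec.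
Qed.

Lemma Gs_Gq (A : 'M[F]_4) : in_Gstar A -> in_Gq A.
Proof.
move=> HA; have [B [e [_ He E _]]] := Gs_inv HA.
have [q Hq EA] := Gs_enc HA.
have := checkGs_ok; rewrite /checkGs allLE => /allP/(_ q Hq) /andP [Hp Hs].
rewrite EA; apply: GqK_dec => //; rewrite -EA; by case: (unit_from E He).
Qed.

Lemma GsP (M : 'M[F]_4) x : in_Gstar M -> kindP (x *m M) = kindP x.
Proof.
move=> HM; have [q Hq ->] := Gs_enc HM.
have [->|Hx] := eqVneq x 0; first by rewrite mul0mx.
rewrite /kindP encV_mul encM_decM.
have := checkGsKind_ok; rewrite /checkGsKind allLE => /allP/(_ q Hq).
rewrite allLE => /allP/(_ (encV x)); rewrite mem_nzV enc_nz Hx => /(_ isT).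
by case/andP => /eqP.
Qed.

Lemma GsL (M : 'M[F]_4) c : in_Gstar M -> kindL (c *m M^T) = kindL c.
Proof.
move=> HM; have [q Hq ->] := Gs_enc HM.
have [->|Hc] := eqVneq c 0; first by rewrite mul0mx.
rewrite /kindL tr_dec encV_mul encM_decM.
have := checkGsKind_ok; rewrite /checkGsKind allLE => /allP/(_ q Hq).
rewrite allLE => /allP/(_ (encV c)); rewrite mem_nzV enc_nz Hc => /(_ isT).
by case/andP => _ /eqP.
Qed.

Lemma repP_F k : decV (repP k) != 0 /\ kindP (decV (repP k)) = k.
Proof. by case/andP: (repP_ok k) => H1 /eqP H2; rewrite dec_neq0 /kindP encV_decV. Qed.

Lemma repL_F k : decV (repL k) != 0 /\ kindL (decV (repL k)) = k.
Proof. by case/andP: (repL_ok k) => H1 /eqP H2; rewrite dec_neq0 /kindL encV_decV. Qed.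

Lemma match_kP (T : Type) (P : point_kind -> T) k :
  match k with CPt => P CPt | TPt => P TPt | ThreeG => P ThreeG | OneG => P OneG
  | ZeroG => P ZeroG end = P k.
Proof. by case: k. Qed.
Lemma match_kL (T : Type) (P : plane_kind -> T) k :
  match k with GammaPl => P GammaPl | TwoC => P TwoC | ThreeC => P ThreeC
  | OneBarC => P OneBarC | ZeroC => P ZeroC end = P k.
Proof. by case: k. Qed.

Lemma Gs_repP (x : 'rV[F]_4) : x != 0 ->
  exists2 M, in_Gstar M & proj_eq (decV (repP (kindP x)) *m M) x.
Proof.
move=> Hx; have := checkPtOrb_ok; rewrite /checkPtOrb; cbv zeta; rewrite allLE.
move/allP/(_ (encV x)); rewrite mem_nzV enc_nz Hx => /(_ isT).
rewrite (match_kP (fun k => orbP (repP k)) (kPt (encV x))).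
move/inV_P/mapP => [q Hq Hn].
have := @norm_proj (mulvmK (repP (kindP x)) (MK q)) (encV x); rewrite enc_nz Hx.
move=> /(_ isT (esym Hn)) Hp.
exists (decM (MK q)); first exact: Gs_of_good.
by rewrite mulvm_dec -[X in proj_eq _ X](decV_encV x) proj_dec.
Qed.

Lemma Gs_repL (c : 'rV[F]_4) : c != 0 ->
  exists2 M, in_Gstar M & proj_eq (decV (repL (kindL c)) *m M^T) c.
Proof.
move=> Hc; have := checkPlOrb_ok; rewrite /checkPlOrb; cbv zeta; rewrite allLE.
move/allP/(_ (encV c)); rewrite mem_nzV enc_nz Hc => /(_ isT).
rewrite (match_kL (fun k => orbL (repL k)) (kPl (encV c))).
move/inV_P/mapP => [q Hq Hn].
have := @norm_proj (mulvmK (repL (kindL c)) (trK (MK q))) (encV c); rewrite enc_nz Hc.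
move=> /(_ isT (esym Hn)) Hp.
exists (decM (MK q)); first exact: Gs_of_good.
by rewrite tr_dec mulvm_dec -[X in proj_eq _ X](decV_encV c) proj_dec.
Qed.

Lemma Gs_transP (x y : 'rV[F]_4) : x != 0 -> y != 0 -> kindP x = kindP y ->
  pt_orbit (@in_Gstar F) x y.
Proof.
move=> Hx Hy E.
have [M1 H1 /proj_eqP [k1 Hk1 Ex]] := Gs_repP Hx.
have [M2 H2 /proj_eqP [k2 Hk2 Ey]] := Gs_repP Hy.
rewrite -E in Ey; set r := decV (repP (kindP x)) in Ex Ey.
have [B1 [d1 [HB1 Hd1 EB1 _]]] := Gs_inv H1.
exists (B1 *m M2); split; first exact: Gs_mul.
apply: (@proj_eqI _ _ (k2 / (k1 * d1))).
  by rewrite mulf_neq0 // invr_neq0 // mulf_neq0.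
rewrite Ey Ex -scalemxAl mulmxA -(mulmxA r) EB1 mul_mx_scalar -scalemxAl scalerA.
rewrite scalerA; congr (_ *: _); field; by apply/andP; split.
Qed.

Lemma pl_from (M N : 'M[F]_4) d k (c c' : 'rV[F]_4) : N *m M = d%:M -> d != 0 -> k != 0 ->
  c' = k *: (c *m M^T) -> forall x, incid x c = incid (x *m N) c'.
Proof.
move=> E Hd Hk -> x.
rewrite /incid dot_scaler mulf_eq0 (negbTE Hk) /= dot_mul -mulmxA E mul_mx_scalar.
by rewrite dot_scalel mulf_eq0 (negbTE Hd).
Qed.

Lemma Gs_transL (c c' : 'rV[F]_4) : c != 0 -> c' != 0 -> kindL c = kindL c' ->
  pl_orbit (@in_Gstar F) c c'.
Proof.
move=> Hc Hc' E.
have [M1 H1 /proj_eqP [k1 Hk1 Ec]] := Gs_repL Hc.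
have [M2 H2 /proj_eqP [k2 Hk2 Ec']] := Gs_repL Hc'.
rewrite -E in Ec'; set r := decV (repL (kindL c)) in Ec Ec'.
have [B1 [d1 [HB1 Hd1 EM1 EB1]]] := Gs_inv H1.
have Er : r = (k1 * d1)^-1 *: (c *m B1^T).
  rewrite Ec -scalemxAl -mulmxA -trmx_mul EB1 tr_scalar_mx mul_mx_scalar scalerA.
  rewrite !scalerA -{1}[r]scale1r; congr (_ *: _); field; by apply/andP; split.
have HP := Gs_mul H2 HB1.
have [Q [e [HQ He EPQ EQP]]] := Gs_inv HP.
exists Q; split => // x _.
apply: (pl_from (M := M2 *m B1) EQP He (k := k2 / (k1 * d1))).
  by rewrite mulf_neq0 // invr_neq0 // mulf_neq0.
by rewrite Ec' Er -scalemxAl -mulmxA -trmx_mul scalerA mulrC.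
Qed.

Lemma Gq_enc A : in_Gq A -> GqptsK (encM A) && GqsurjK (encM A).
Proof.
case=> _ [H1 H2]; apply/andP; split; apply/allP => t _; apply/hasP.
- have [s Hs] := H1 (omap phi t); exists (omap psi s); first exact: memT.
  by move: Hs; rewrite -{1}(omapK s) -{1}(decM_encM A) Pt_dec Pt_dec mulvm_dec proj_dec.
- have [s Hs] := H2 (omap phi t); exists (omap psi s); first exact: memT.
  by move: Hs; rewrite -{1}(omapK s) -{1}(decM_encM A) Pt_dec Pt_dec mulvm_dec proj_dec.
Qed.

Lemma Gq_mul (A B : 'M[F]_4) : in_Gq A -> in_Gq B -> in_Gq (A *m B).
Proof.
case=> UA [PA SA] [UB [PB SB]]; split; first by rewrite unitmx_mul UA UB.
split.
- move=> t; have [s /proj_eqP [k Hk E]] := PA t; have [s' /proj_eqP [k' Hk' E']] := PB s.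
  exists s'; apply: (@proj_eqI _ _ (k * k')); first by rewrite mulf_neq0.
  by rewrite mulmxA E -scalemxAl E' scalerA.
- move=> s'; have [s /proj_eqP [k' Hk' E']] := SB s'; have [t /proj_eqP [k Hk E]] := SA s.
  exists t; apply: (@proj_eqI _ _ (k * k')); first by rewrite mulf_neq0.
  by rewrite mulmxA E -scalemxAl E' scalerA.
Qed.

Lemma nz_mul (x : 'rV[F]_4) (A : 'M[F]_4) : A \in unitmx -> x != 0 -> x *m A != 0.
Proof.
move=> U; apply: contraNneq => E.
by rewrite -(mulmxK U x) E mul0mx.
Qed.

Lemma img (A : 'M[F]_4) tK : in_Gq A ->
  exists sK : option K, exists2 k : F, k != 0 & decV (PtK tK) *m A = k *: decV (PtK sK).
Proof.
case=> _ [Hp _]; have [s Hs] := Hp (omap phi tK).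
move: Hs; rewrite Pt_dec -(omapK s) Pt_dec => /proj_eqP [k Hk E].
by exists (omap psi s), k.
Qed.

Lemma img_inj (A : 'M[F]_4) t1 t2 s k1 k2 : A \in unitmx -> k1 != 0 -> k2 != 0 ->
  decV (PtK t1) *m A = k1 *: decV (PtK s) -> decV (PtK t2) *m A = k2 *: decV (PtK s) ->
  proj_eqK (PtK t1) (PtK t2).
Proof.
move=> U Hk1 Hk2 H1 H2.
have E1 : (k1^-1 *: decV (PtK t1)) *m A = decV (PtK s).
  by rewrite -scalemxAl H1 scalerA mulVf // scale1r.
have E2 : (k2^-1 *: decV (PtK t2)) *m A = decV (PtK s).
  by rewrite -scalemxAl H2 scalerA mulVf // scale1r.
have E : k1^-1 *: decV (PtK t1) = k2^-1 *: decV (PtK t2).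
  by rewrite -[LHS](mulmxK U) E1 -E2 mulmxK.
rewrite -proj_dec; apply: (@proj_eqI _ _ (k2 / k1)).
  by rewrite mulf_neq0 // invr_neq0.
have := congr1 (fun v => k2 *: v) E; rewrite /= !scalerA mulfV // scale1r => <-.
by [].
Qed.

Lemma oeqbE s t : oeqb s t = (s == t).
Proof. by case: s => [a|]; case: t => [b|] //=; rewrite /eq_op /= /keqb; case: a; case: b. Qed.

Lemma fix_lemma (P S : 'rV[F]_4) (A M N : 'M[F]_4) k m f :
  P *m A = k *: S -> P *m M = m *: S -> M *m N = f%:M -> m != 0 ->
  P *m (A *m N) = (k * f / m) *: P.
Proof.
move=> H1 H2 H3 Hm.
have ES : S = m^-1 *: (P *m M) by rewrite H2 scalerA mulVf // scale1r.
rewrite mulmxA H1 -scalemxAl ES -scalemxAl -mulmxA H3 mul_mx_scalar !scalerA.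
by rewrite mulrAC.
Qed.

Lemma cand_from (A' : 'M[F]_4) t l : l != 0 ->
  decV (PtK t) *m A' = l *: decV (PtK t) -> mulvmK (PtK t) (encM A') \in candT t.
Proof.
move=> Hl H; have := congr1 encV H; rewrite encV_mul encV_decV encV_scale encV_decV => ->.
by apply: candT_mem; exact: psi_nz.
Qed.

Lemma Gq_decomp (A : 'M[F]_4) : in_Gq A ->
  exists M A' (d : F), [/\ in_Gstar M, in_Gq A', goodA (encM A'), d != 0 & A' *m M = d *: A].
Proof.
move=> HA; have U := HA.1.
have [s1 [k1 Hk1 E1]] := img None HA.
have [s2 [k2 Hk2 E2]] := img (Some K0) HA.
have [s3 [k3 Hk3 E3]] := img (Some K1) HA.
have D12 : ~~ oeqb s1 s2.
  rewrite oeqbE; apply/eqP => e; subst s2.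
  by have := img_inj U Hk1 Hk2 E1 E2; vm_compute.
have D13 : ~~ oeqb s1 s3.
  rewrite oeqbE; apply/eqP => e; subst s3.
  by have := img_inj U Hk1 Hk3 E1 E3; vm_compute.
have D23 : ~~ oeqb s2 s3.
  rewrite oeqbE; apply/eqP => e; subst s3.
  by have := img_inj U Hk2 Hk3 E2 E3; vm_compute.
have := checkTriple_ok; rewrite /checkTriple allLE => /allP/(_ s1 (memT _)).
rewrite allLE => /allP/(_ s2 (memT _)); rewrite allLE => /allP/(_ s3 (memT _)).
rewrite D12 D13 D23; cbv beta iota delta [andb]; rewrite hasLE => /hasP [q Hq]; cbv zeta.
rewrite -!proj_dec -!mulvm_dec => /andP [/andP [/proj_eqP [m1 Hm1 F1] /proj_eqP [m2 Hm2 F2]]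
  /proj_eqP [m3 Hm3 F3]].
set M := decM (MK q) in F1 F2 F3.
have HM : in_Gstar M := Gs_of_good Hq.
have [N [f [HN Hf EMN ENM]]] := Gs_inv HM.
have HA' : in_Gq (A *m N) := Gq_mul HA (Gs_Gq HN).
exists M, (A *m N), f; split => //; last first.
  by rewrite -mulmxA ENM mul_mx_scalar.
case/andP: (Gq_enc HA') => Hp Hs.
apply: Gq_good => //.
- apply: (@cand_from _ _ (k1 * f / m1)); first by rewrite !mulf_neq0 // invr_neq0.
  exact: fix_lemma E1 F1 EMN Hm1.
- apply: (@cand_from _ _ (k2 * f / m2)); first by rewrite !mulf_neq0 // invr_neq0.
  exact: fix_lemma E2 F2 EMN Hm2.
- apply: (@cand_from _ _ (k3 * f / m3)); first by rewrite !mulf_neq0 // invr_neq0.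
  exact: fix_lemma E3 F3 EMN Hm3.
Qed.

Lemma Gq_kindP (A : 'M[F]_4) x : in_Gq A -> x != 0 -> kindP (x *m A) = kindP x.
Proof.
move=> HA Hx; have [M [A' [d [HM HA' G Hd E]]]] := Gq_decomp HA.
have HxA := nz_mul HA.1 Hx.
rewrite -(kind_scale Hd HxA).1 scalemxAr -E mulmxA GsP //.
case/andP: G => /andP [_ HP] _; move: HP; rewrite allLE => /allP/(_ (encV x)).
by rewrite mem_nzV enc_nz Hx /kindP encV_mul => /(_ isT) /eqP.
Qed.

Lemma Gq_kindL (A : 'M[F]_4) (c c' : 'rV[F]_4) : in_Gq A -> c != 0 -> c' != 0 ->
  (forall x, x != 0 -> incid x c = incid (x *m A) c') -> kindL c' = kindL c.
Proof.
move=> HA Hc Hc' H.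
have [M [A' [d [HM HA' G Hd E]]]] := Gq_decomp HA.
case/andP: G => /andP [Hinv _] HL.
have [e He EA'] := invOK_dec Hinv; rewrite decM_encM in EA'.
set B' := decM (adjK (encM A')) in EA'.
have [N [f [HN Hf EMN ENM]]] := Gs_inv HM.
pose c2 := c *m B'^T *m N^T.
have Z : forall y, y != 0 -> incid y c' = incid y c2.
  move=> y Hy; pose x := y *m invmx A.
  have Exy : x *m A = y by rewrite /x mulmxKV // HA.1.
  have Hx : x != 0 by apply: contraNneq Hy => e0; rewrite -Exy e0 mul0mx.
  rewrite -[in LHS]Exy -H //.
  have Ey : y = d^-1 *: (x *m A' *m M) by rewrite -mulmxA E scalemxAr scalerA mulVf // scale1r Exy.
  rewrite /c2 /incid dot_mul dot_mul.
  have -> : y *m N *m B' = (d^-1 * f * e) *: x.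
    rewrite Ey -!scalemxAl -(mulmxA _ M) EMN mul_mx_scalar -scalemxAl -mulmxA EA'.
    by rewrite mul_mx_scalar !scalerA.
  by rewrite dot_scalel !mulf_eq0 invr_eq0 (negbTE Hd) (negbTE Hf) (negbTE He).
rewrite (zero_kind Hc' Z) /c2 GsL //.
rewrite /kindL tr_dec encV_mul encM_decM.
by move: HL; rewrite allLE => /allP/(_ (encV c)); rewrite mem_nzV enc_nz Hc => /(_ isT) /eqP.
Qed.

Lemma main_sec :
  (forall x y : 'rV[F]_4, x != 0 -> y != 0 ->
     (pt_orbit (@in_Gq F) x y <-> pt_orbit (@in_Gstar F) x y)) /\
  (forall c c' : 'rV[F]_4, c != 0 -> c' != 0 ->
     (pl_orbit (@in_Gq F) c c' <-> pl_orbit (@in_Gstar F) c c')) /\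
  (forall c : 'rV[F]_4, c != 0 -> exists k, plane_of_kind k c) /\
  (forall k : plane_kind, exists c0 : 'rV[F]_4, plane_of_kind k c0 /\
     forall c : 'rV[F]_4, c != 0 -> (pl_orbit (@in_Gq F) c0 c <-> plane_of_kind k c)) /\
  card_plane_kind F GammaPl = (3 * 5)%N /\
  card_plane_kind F TwoC = (3 * 20)%N /\
  card_plane_kind F ThreeC = (3 * 10)%N /\
  card_plane_kind F OneBarC = (3 * 30)%N /\
  card_plane_kind F ZeroC = (3 * 20)%N /\
  (forall x : 'rV[F]_4, x != 0 -> exists k, point_of_kind k x) /\
  (forall k : point_kind, exists x0 : 'rV[F]_4, point_of_kind k x0 /\
     forall x : 'rV[F]_4, x != 0 -> (pt_orbit (@in_Gq F) x0 x <-> point_of_kind k x)) /\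
  card_point_kind F CPt = (3 * 5)%N /\
  card_point_kind F TPt = (3 * 20)%N /\
  card_point_kind F ThreeG = (3 * 10)%N /\
  card_point_kind F OneG = (3 * 30)%N /\
  card_point_kind F ZeroG = (3 * 20)%N.
Proof.
have cardP k : card_point_kind F k = count (point_of_kindK k) allV.
  by rewrite /card_point_kind cardV; apply: eq_count => v; rewrite /= point_of_kind_dec.
have cardL k : card_plane_kind F k = count (plane_of_kindK k) allV.
  by rewrite /card_plane_kind cardV; apply: eq_count => v; rewrite /= plane_of_kind_dec.
have := checkCount_ok; rewrite /checkCount.
move=> /andP [/eqP l1 /andP [/eqP l2 /andP [/eqP l3 /andP [/eqP l4 /andP [/eqP l5
  /andP [/eqP p1 /andP [/eqP p2 /andP [/eqP p3 /andP [/eqP p4 /eqP p5]]]]]]]]].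
have ptk x y A : in_Gq A -> x != 0 -> y != 0 -> proj_eq (x *m A) y -> kindP y = kindP x.
  move=> HA Hx Hy /proj_eqP [k Hk Ey].
  have Hxa : x *m A != 0 by apply: contraNneq Hy => E; rewrite Ey E scaler0.
  by rewrite Ey (kind_scale Hk Hxa).1 (Gq_kindP HA Hx).
split.
  move=> x y Hx Hy; split.
    by case=> A [HA Hp]; apply: Gs_transP => //; rewrite (ptk _ _ _ HA Hx Hy Hp).
  by case=> A [HA Hp]; exists A; split => //; exact: Gs_Gq.
split.
  move=> c c' Hc Hc'; split.
    by case=> A [HA H]; apply: Gs_transL => //; rewrite (Gq_kindL HA Hc Hc' H).
  by case=> A [HA H]; exists A; split => //; exact: Gs_Gq.
split.
  by move=> c Hc; exists (kindL c); rewrite plane_kindE Hc eqxx.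
split.
  move=> k.
  have : (0 < count (plane_of_kindK k) allV)%N by case: k; rewrite ?l1 ?l2 ?l3 ?l4 ?l5.
  rewrite -has_count => /hasP [v _].
  rewrite -plane_of_kind_dec plane_kindE => /andP [Hv0 /eqP Hk].
  exists (decV v); split; first by rewrite plane_kindE Hv0 Hk eqxx.
  move=> c Hc; rewrite plane_kindE Hc /=; split.
    by case=> A [HA H]; rewrite (Gq_kindL HA Hv0 Hc H) Hk.
  move=> /eqP Hkc; have [|A [HA H]] := Gs_transL Hv0 Hc; first by rewrite Hk Hkc.
  by exists A; split => //; exact: Gs_Gq.
rewrite !cardL l1 l2 l3 l4 l5 !cardP p1 p2 p3 p4 p5.
do 5 (split; first by []).
split.
  by move=> x Hx; exists (kindP x); rewrite point_kindE Hx eqxx.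
split; last by [].
move=> k.
have : (0 < count (point_of_kindK k) allV)%N by case: k; rewrite ?p1 ?p2 ?p3 ?p4 ?p5.
rewrite -has_count => /hasP [v _].
rewrite -point_of_kind_dec point_kindE => /andP [Hv0 /eqP Hk].
exists (decV v); split; first by rewrite point_kindE Hv0 Hk eqxx.
move=> x Hx; rewrite point_kindE Hx /=; split.
  by case=> A [HA Hp]; rewrite (ptk _ _ _ HA Hv0 Hx Hp) Hk.
move=> /eqP Hkx; have [|A [HA Hp]] := Gs_transP Hv0 Hx; first by rewrite Hk Hkx.
by exists A; split => //; exact: Gs_Gq.
Qed.

End FPart.

Unset Implicit Arguments. Set Strict Implicit. Set Printing Implicit Defensive.

Theorem theorem6p2 (F : finFieldType) (hF : #|F| = 4%N) :
  (* G_4 and G_4^* have the same orbits on points *)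
  (forall x y : 'rV[F]_4, x != 0 -> y != 0 ->
     (pt_orbit (@in_Gq F) x y <-> pt_orbit (@in_Gstar F) x y)) /\
  (* ... and on planes *)
  (forall c c' : 'rV[F]_4, c != 0 -> c' != 0 ->
     (pl_orbit (@in_Gq F) c c' <-> pl_orbit (@in_Gstar F) c c')) /\
  (* the G_4-orbits of planes are exactly the five plane classes *)
  (forall c : 'rV[F]_4, c != 0 -> exists k, plane_of_kind k c) /\
  (forall k : plane_kind, exists c0 : 'rV[F]_4, plane_of_kind k c0 /\
     forall c : 'rV[F]_4, c != 0 -> (pl_orbit (@in_Gq F) c0 c <-> plane_of_kind k c)) /\
  (* sizes (number of nonzero coordinate vectors = (q-1) * number of planes) *)
  card_plane_kind F GammaPl = (3 * 5)%N /\
  card_plane_kind F TwoC = (3 * 20)%N /\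
  card_plane_kind F ThreeC = (3 * 10)%N /\
  card_plane_kind F OneBarC = (3 * 30)%N /\
  card_plane_kind F ZeroC = (3 * 20)%N /\
  (* the G_4-orbits of points are exactly the five point classes *)
  (forall x : 'rV[F]_4, x != 0 -> exists k, point_of_kind k x) /\
  (forall k : point_kind, exists x0 : 'rV[F]_4, point_of_kind k x0 /\
     forall x : 'rV[F]_4, x != 0 -> (pt_orbit (@in_Gq F) x0 x <-> point_of_kind k x)) /\
  card_point_kind F CPt = (3 * 5)%N /\
  card_point_kind F TPt = (3 * 20)%N /\
  card_point_kind F ThreeG = (3 * 10)%N /\
  card_point_kind F OneG = (3 * 30)%N /\
  card_point_kind F ZeroG = (3 * 20)%N.
Proof. exact: (main_sec hF). Qed.
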